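(* Consider the two-SP new-spectrum model described in the context, let $a=N_f\lambda_S^{1/\alpha-1}$ and $T=\frac{(B_1^o+B_2^o)a}{N_m}$. 1. If $B>T$, then $\mathrm{SW}_{\mathrm{w}}^{\mathrm{NE}}\le\mathrm{SW}_{\mathrm{w}}^{*}<\mathrm{SW}_{\mathrm{wo}}^{*}$, and $\mathrm{SW}_{\mathrm{w}}^{\mathrm{NE}}=\mathrm{SW}_{\mathrm{w}}^{*}$ if and only if, for both $i=1,2$, $$\lambda_S(R_S^0)^{-\alpha}-(R_M^0)^{-\alpha}-\frac{\alpha\lambda_S^2B_i^nR_0}{N_f}(R_S^0)^{-\alpha-1}+\frac{\alpha B_i^oR_0}{N_m}(R_M^0)^{-\alpha-1}\le0,$$ where $R_S^0=\frac{\lambda_S(B_1^n+B_2^n)R_0}{N_f}$ and $R_M^0=\frac{(B_1^o+B_2^o)R_0}{N_m}$. 2. If $B\le T$, then $\mathrm{SW}_{\mathrm{w}}^{\mathrm{NE}}\le\mathrm{SW}_{\mathrm{w}}^{*}=\mathrm{SW}_{\mathrm{wo}}^{*}$, and $\mathrm{SW}_{\mathrm{w}}^{\mathrm{NE}}=\mathrm{SW}_{\mathrm{w}}^{*}=\mathrm{SW}_{\mathrm{wo}}^{*}$ if and only if $$B_1^n\in\Big[B-\frac{B_2^oa}{N_m},\ \frac{B_1^oa}{N_m}\Big],\qquad B_2^n=B-B_1^n.$$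
   Context: Two service providers (SPs) $i=1,2$. SP $i$ has an initial licensed bandwidth $B_i^o>0$ and receives a share $B_i^n\ge0$ of newly available bandwidth $B>0$, with $B_1^n+B_2^n=B$. SP $i$'s total bandwidth is $B_i=B_i^o+B_i^n$, which it splits into macro-cell bandwidth $B_{i,M}\ge0$ and small-cell bandwidth $B_{i,S}$ with $B_{i,M}+B_{i,S}\le B_i$; the new bandwidth may only be used in small-cells, which is imposed as the regulatory constraint $B_{i,S}\ge B_{i,S}^0:=B_i^n$. Parameters: $R_0>0$, $\lambda_S>1$, a mass $N_m>0$ of mobile users (served only by macro-cells) and a mass $N_f>0$ of fixed users, each with utility $u(r)=r^{1-\alpha}/(1-\alpha)$, $\alpha\in(0,1)$. Second-stage prices are market-clearing: with $R_M=\frac{(B_{1,M}+B_{2,M})R_0}{N_m}$ and $R_S=\frac{\lambda_S(B_{1,S}+B_{2,S})R_0}{N_f}$, prices are $R_M^{-\alpha}$ (macro) and $R_S^{-\alpha}$ (small), mobile users receive rate $R_M$ and fixed users rate $R_S$. SP $i$'s payoff in the bandwidth game is $S_i=\lambda_SB_{i,S}R_0R_S^{-\alpha}+B_{i,M}R_0R_M^{-\alpha}$. Social welfare is $\mathrm{SW}=N_mu(R_M)+N_fu(R_S)$. For a given split $(B_1^n,B_2^n)$: $\mathrm{SW}_{\mathrm{wo}}^{*}$ is the maximal social welfare over all bandwidth allocations without the regulatory constraints (equal to the equilibrium social welfare of the unconstrained game); $\mathrm{SW}_{\mathrm{w}}^{*}$ is the maximal social welfare over all bandwidth allocations satisfying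 the regulatory constraints $B_{i,S}\ge B_i^n$; and $\mathrm{SW}_{\mathrm{w}}^{\mathrm{NE}}$ is the social welfare at the (unique) Nash equilibrium of the bandwidth game with the regulatory constraints. *)

(* Defs.v *)
From HB Require Import structures.
From mathcomp Require Import all_boot all_order all_algebra.
From mathcomp Require Import all_classical all_reals all_analysis.
Set Implicit Arguments. Unset Strict Implicit. Unset Printing Implicit Defensive.
Import Order.TTheory GRing.Theory Num.Theory.
Local Open Scope classical_set_scope.
Local Open Scope ring_scope.

Section Model.
Variable R : realType.

Record alloc := Alloc { BM1 : R; BS1 : R; BM2 : R; BS2 : R }.

Definition util (al r : R) : R := r `^ (1 - al) / (1 - al).

Definition rateM (R0 Nm X : R) : R := X * R0 / Nm.
Definition rateS (R0 lamS Nf Y : R) : R := lamS * Y * R0 / Nf.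

Definition RM_of (R0 Nm : R) (p : alloc) : R := rateM R0 Nm (BM1 p + BM2 p).
Definition RS_of (R0 lamS Nf : R) (p : alloc) : R :=
  rateS R0 lamS Nf (BS1 p + BS2 p).

Definition SW (al R0 lamS Nm Nf : R) (p : alloc) : R :=
  Nm * util al (RM_of R0 Nm p) + Nf * util al (RS_of R0 lamS Nf p).

(* payoffs S_1, S_2 (market-clearing prices R_M^-alpha, R_S^-alpha) *)
Definition payoff1 (al R0 lamS Nm Nf : R) (p : alloc) : R :=
  lamS * BS1 p * R0 * (RS_of R0 lamS Nf p) `^ (- al)
  + BM1 p * R0 * (RM_of R0 Nm p) `^ (- al).
Definition payoff2 (al R0 lamS Nm Nf : R) (p : alloc) : R :=
  lamS * BS2 p * R0 * (RS_of R0 lamS Nf p) `^ (- al)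
  + BM2 p * R0 * (RM_of R0 Nm p) `^ (- al).

(* Lb = 0 : no regulatory constraint;  Lb = B_i^n : with the constraint. *)
Definition player_feasible (Bi Lb bm bs : R) : Prop :=
  0 <= bm /\ Lb <= bs /\ bm + bs <= Bi.

Definition alloc_feasible (B1 L1 B2 L2 : R) (p : alloc) : Prop :=
  player_feasible B1 L1 (BM1 p) (BS1 p) /\ player_feasible B2 L2 (BM2 p) (BS2 p).

Definition SW_wo_opt (al R0 lamS Nm Nf Bo1 Bo2 Bn1 Bn2 : R) : R :=
  sup [set x | exists p, alloc_feasible (Bo1 + Bn1) 0 (Bo2 + Bn2) 0 p /\
                         SW al R0 lamS Nm Nf p = x].

Definition SW_w_opt (al R0 lamS Nm Nf Bo1 Bo2 Bn1 Bn2 : R) : R :=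
  sup [set x | exists p, alloc_feasible (Bo1 + Bn1) Bn1 (Bo2 + Bn2) Bn2 p /\
                         SW al R0 lamS Nm Nf p = x].

Definition is_NE_w (al R0 lamS Nm Nf Bo1 Bo2 Bn1 Bn2 : R) (p : alloc) : Prop :=
  alloc_feasible (Bo1 + Bn1) Bn1 (Bo2 + Bn2) Bn2 p /\
  (forall bm bs, player_feasible (Bo1 + Bn1) Bn1 bm bs ->
     payoff1 al R0 lamS Nm Nf (Alloc bm bs (BM2 p) (BS2 p))
       <= payoff1 al R0 lamS Nm Nf p) /\
  (forall bm bs, player_feasible (Bo2 + Bn2) Bn2 bm bs ->
     payoff2 al R0 lamS Nm Nf (Alloc (BM1 p) (BS1 p) bm bs)
       <= payoff2 al R0 lamS Nm Nf p).

Definition a_const (al lamS Nf : R) : R := Nf * lamS `^ (al^-1 - 1).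
Definition T_thr (al lamS Nm Nf Bo1 Bo2 : R) : R :=
  (Bo1 + Bo2) * a_const al lamS Nf / Nm.

Definition RS0 (R0 lamS Nf Bn1 Bn2 : R) : R := lamS * (Bn1 + Bn2) * R0 / Nf.
Definition RM0 (R0 Nm Bo1 Bo2 : R) : R := (Bo1 + Bo2) * R0 / Nm.

Definition cond_i (al R0 lamS Nm Nf Bo1 Bo2 Bn1 Bn2 Bni Boi : R) : Prop :=
  lamS * (RS0 R0 lamS Nf Bn1 Bn2) `^ (- al) - (RM0 R0 Nm Bo1 Bo2) `^ (- al)
  - al * lamS ^+ 2 * Bni * R0 / Nf * (RS0 R0 lamS Nf Bn1 Bn2) `^ (- al - 1)
  + al * Boi * R0 / Nm * (RM0 R0 Nm Bo1 Bo2) `^ (- al - 1) <= 0.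

End Model.

(* Main.v *)
Require Import Defs.
From HB Require Import structures.
From mathcomp Require Import all_boot all_order all_algebra.
From mathcomp Require Import all_classical all_reals all_analysis.
From mathcomp Require Import ring lra.
Import Order.TTheory GRing.Theory Num.Theory.
Import numFieldNormedType.Exports.
Local Open Scope ring_scope.


Lemma powR_ltdec {R : realType} (e x y : R) : e < 0 -> 0 < x -> x < y -> y `^ e < x `^ e.
Proof.
move=> e0 x0 xy.
have y0 : 0 < y by apply: lt_trans xy.
have h : x `^ (- e) < y `^ (- e).
  apply: (gt0_ltr_powR _ _ _ xy); rewrite ?oppr_gt0 // nnegrE ltW //.
have Ey : y `^ e = (y `^ (-e))^-1 by rewrite -powRN opprK.
have Ex : x `^ e = (x `^ (-e))^-1 by rewrite -powRN opprK.
by rewrite Ey Ex ltf_pV2 ?posrE ?powR_gt0.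
Qed.

Lemma powR_ledec {R : realType} (e x y : R) : e < 0 -> 0 < x -> x <= y -> y `^ e <= x `^ e.
Proof.
move=> e0 x0; rewrite le_eqVlt => /orP[/eqP->//|xy].
exact/ltW/powR_ltdec.
Qed.

Lemma powR_mvt {R : realType} (r z0 z : R) : 0 < z0 -> 0 < z -> z0 != z ->
  exists2 c, 0 < c /\ (c - z0) * (z - z0) > 0 & z `^ r - z0 `^ r = r * c `^ (r - 1) * (z - z0).
Proof.
move=> z00 z0' nz.
have key : forall a b : R, 0 < a -> a < b -> exists2 c, a < c < b & b `^ r - a `^ r = r * c `^ (r - 1) * (b - a).
  move=> a b a0 ab.
  have := @MVT R (fun y : R => y `^ r) (fun y : R => r * y `^ (r - 1)) a b ab.
  case.
  - move=> x; rewrite in_itv /= => /andP[ax _]; apply: is_derive1_powR; lra.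
  - apply: derivable_within_continuous => x; rewrite in_itv /= => /andP[ax _].
    apply: derivable_powR; rewrite in_itv /= andbT; lra.
  - move=> c; rewrite in_itv /= => cab ->; by exists c.
case: (ltgtP z0 z) => [lt|gt|eq]; last by rewrite eq eqxx in nz.
- have [c /andP[h1 h2] e] := key _ _ z00 lt; exists c => //; split; [lra|].
  by apply: mulr_gt0; lra.
- have [c /andP[h1 h2] e] := key _ _ z0' gt; exists c.
    split; [lra|]; rewrite -mulrNN; apply: mulr_gt0; lra.
  have -> : z `^ r - z0 `^ r = - (z0 `^ r - z `^ r) by lra.
  rewrite e; lra.
Qed.

Lemma powR_key {R : realType} (r z0 z : R) : r < 1 -> 0 < z0 -> 0 < z -> z0 != z ->
  exists2 d, d < 0 & z `^ r - z0 `^ r - r * z0 `^ (r - 1) * (z - z0) = r * d.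
Proof.
move=> r1 z00 z0' nz.
have [c [c0 cz] E] := powR_mvt r z0 z z00 z0' nz.
exists ((c `^ (r - 1) - z0 `^ (r - 1)) * (z - z0)); last first.
  rewrite E; ring.
have e0 : r - 1 < 0 by lra.
case: (ltgtP c z0) => [lt|gt|eq].
- have h := powR_ltdec _ _ _ e0 c0 lt.
  have hz : z - z0 < 0 by nra.
  nra.
- have h := powR_ltdec _ _ _ e0 z00 gt.
  have hz : z - z0 > 0 by nra.
  nra.
- by move: cz; rewrite eq subrr mul0r ltxx.
Qed.

Lemma T1s {R : realType} (b z0 z : R) : 0 < b -> b < 1 -> 0 < z0 -> 0 <= z -> z != z0 ->
  z `^ b < z0 `^ b + b * z0 `^ (b - 1) * (z - z0).
Proof.
move=> b0 b1 z00 z0' nz.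
have [->|zp] := eqVneq z 0.
  rewrite powR0 ?gt_eqF //.
  have E : z0 * z0 `^ (b - 1) = z0 `^ b by rewrite mulr_powRB1 // ltW.
  have hp : 0 < z0 `^ b by apply: powR_gt0.
  have -> : b * z0 `^ (b - 1) * (0 - z0) = - b * (z0 * z0 `^ (b - 1)) by ring.
  rewrite E; nra.
have zz : 0 < z by rewrite lt_neqAle eq_sym zp.
have [d d0 E] := powR_key b z0 z b1 z00 zz ltac:(by rewrite eq_sym).
nra.
Qed.

Lemma T1 {R : realType} (b z0 z : R) : 0 < b -> b < 1 -> 0 < z0 -> 0 <= z ->
  z `^ b <= z0 `^ b + b * z0 `^ (b - 1) * (z - z0).
Proof.
move=> b0 b1 z00 z0'.
have [->|nz] := eqVneq z z0; first by rewrite subrr mulr0 addr0.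
exact/ltW/T1s.
Qed.

Lemma T2 {R : realType} (r z0 z : R) : r < 0 -> 0 < z0 -> 0 < z ->
  z0 `^ r + r * z0 `^ (r - 1) * (z - z0) <= z `^ r.
Proof.
move=> r0 z00 z0'.
have [->|nz] := eqVneq z z0; first by rewrite subrr mulr0 addr0.
have [d d0 E] := powR_key r z0 z ltac:(lra) z00 z0' ltac:(by rewrite eq_sym).
nra.
Qed.

Definition Hf {R : realType} (al c x : R) := x * (x + c) `^ (- al).
Definition dHf {R : realType} (al c x : R) := (x + c) `^ (- al) * (1 - al * x / (x + c)).

Lemma powRm1 {R : realType} (al z : R) : 0 < z -> z `^ (- al - 1) = z `^ (- al) / z.
Proof.
move=> z0; rewrite powRD; last by apply/implyP => _; rewrite gt_eqF.
by rewrite powR_inv1 // ltW.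
Qed.

Lemma Htan {R : realType} (al c x0 x : R) : 0 < al -> al < 1 -> 0 <= c -> 0 <= x -> 0 <= x0 ->
  0 < x0 + c -> x != x0 ->
  Hf al c x < Hf al c x0 + dHf al c x0 * (x - x0).
Proof.
move=> a0 a1 c0 x0' x00 z00 nx.
rewrite /Hf /dHf.
set z0 := x0 + c.
have w0 : 0 < z0 `^ (- al) by apply: powR_gt0.
have [zE|zp] := eqVneq (x + c) 0.
  have xz : x = 0 by lra.
  have cz : c = 0 by lra.
  rewrite zE powR0 ?oppr_eq0 ?gt_eqF // mulr0 xz.
  have x0p : 0 < x0 by rewrite /z0 cz addr0 in z00.
  rewrite /z0 cz addr0.
  have -> : x0 * x0 `^ (- al) + x0 `^ (- al) * (1 - al * x0 / x0) * (0 - x0)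
      = al * x0 * x0 `^ (- al).
    by field; rewrite gt_eqF.
  by rewrite !mulr_gt0 // powR_gt0.
set z := x + c.
have zz : 0 < z by rewrite lt_neqAle eq_sym zp /z; apply: addr_ge0.
have nz : z != z0 by rewrite /z /z0; apply: contra nx => /eqP h; apply/eqP; lra.
have h1 := T1s (1 - al) z0 z ltac:(lra) ltac:(lra) z00 (ltW zz) nz.
have h2 := T2 (- al) z0 z ltac:(lra) z00 zz.
have E1 : 1 - al - 1 = - al by ring.
rewrite E1 in h1.
rewrite powRm1 // in h2.
have Ez : z * z `^ (- al) = z `^ (1 - al).
  by have h := @mulr_powRB1 R z (1 - al) (ltW zz) ltac:(lra); rewrite E1 in h.
have Ez0 : z0 * z0 `^ (- al) = z0 `^ (1 - al).
  by have h := @mulr_powRB1 R z0 (1 - al) (ltW z00) ltac:(lra); rewrite E1 in h.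
have Hx : x * z `^ (- al) = z `^ (1 - al) - c * z `^ (- al).
  by rewrite -Ez /z; ring.
have h3 : c * (z0 `^ (- al) + - al * (z0 `^ (- al) / z0) * (z - z0)) <= c * z `^ (- al).
  by apply: ler_wpM2l.
rewrite Hx.
have -> : x0 * z0 `^ (- al) + z0 `^ (- al) * (1 - al * x0 / z0) * (x - x0)
   = (z0 * z0 `^ (- al) + (1 - al) * z0 `^ (- al) * (z - z0))
     - c * (z0 `^ (- al) + - al * (z0 `^ (- al) / z0) * (z - z0)).
  by rewrite /z /z0; field; rewrite gt_eqF.
rewrite Ez0; lra.
Qed.

Lemma Htan_le {R : realType} (al c x0 x : R) : 0 < al -> al < 1 -> 0 <= c -> 0 <= x -> 0 <= x0 ->
  0 < x0 + c -> Hf al c x <= Hf al c x0 + dHf al c x0 * (x - x0).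
Proof.
move=> a0 a1 c0 x0' x00 z00.
have [->|nx] := eqVneq x x0; first by rewrite subrr mulr0 addr0.
exact/ltW/Htan.
Qed.


Definition pay {R : realType} (al cS cM os om s m : R) := cS * Hf al os s + cM * Hf al om m.
Definition Dv {R : realType} (al cS cM os om s m : R) := cS * dHf al os s - cM * dHf al om m.
Definition NEP {R : realType} (al cS cM os om Lb Bi s0 m0 : R) :=
  forall m s, 0 <= m -> Lb <= s -> m + s <= Bi ->
    pay al cS cM os om s m <= pay al cS cM os om s0 m0.

Lemma pay_tan {R : realType} (al cS cM os om t0 m0 t m : R) :
  0 < al -> al < 1 -> 0 < cS -> 0 < cM -> 0 <= os -> 0 <= om -> 0 <= t0 -> 0 <= m0 ->
  0 < t0 + os -> 0 < m0 + om -> 0 <= t -> 0 <= m -> t + m = t0 + m0 -> t != t0 ->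
  pay al cS cM os om t m < pay al cS cM os om t0 m0 + Dv al cS cM os om t0 m0 * (t - t0).
Proof.
move=> a0 a1 cS0 cM0 os0 om0 t00 m00 p1 p2 t0' m0' E nt.
have h1 := Htan al os t0 t a0 a1 os0 t0' t00 p1 nt.
have h2 := Htan_le al om m0 m a0 a1 om0 m0' m00 p2.
rewrite /pay /Dv.
have em : m - m0 = - (t - t0) by lra.
rewrite em in h2.
have k1 : cS * Hf al os t < cS * (Hf al os t0 + dHf al os t0 * (t - t0)) by rewrite ltr_pM2l.
have k2 : cM * Hf al om m <= cM * (Hf al om m0 + dHf al om m0 * - (t - t0)) by rewrite ler_pM2l.
lra.
Qed.

Lemma cont_pos {R : realType} (f : R -> R) (s : R) : {for s, continuous f} -> 0 < f s ->
  exists2 d : R, 0 < d & forall t, `|s - t| < d -> 0 < f t.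
Proof.
move=> cf fs.
have [e /= e0 He] := proj1 (nbhs_ballP _ _) (@cvgr_gt _ _ _ _ f (f s) cf 0 fs).
by exists e => // t ht; apply: He.
Qed.

Lemma cont_neg {R : realType} (f : R -> R) (s : R) : {for s, continuous f} -> f s < 0 ->
  exists2 d : R, 0 < d & forall t, `|s - t| < d -> f t < 0.
Proof.
move=> cf fs.
have [e /= e0 He] := proj1 (nbhs_ballP _ _) (@cvgr_lt _ _ _ _ f (f s) cf 0 fs).
by exists e => // t ht; apply: He.
Qed.

Lemma cont_powR {R : realType} (r x : R) : 0 < x -> {for x, continuous (fun y : R => y `^ r)}.
Proof.
move=> x0; apply: differentiable_continuous; apply/derivable1_diffP.
by apply: derivable_powR; rewrite in_itv /= andbT.
Qed.

Lemma cont_Dv {R : realType} (al cS cM os om Bi s : R) : 0 < s + os -> 0 < Bi - s + om ->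
  {for s, continuous (fun t : R => Dv al cS cM os om t (Bi - t))}.
Proof.
move=> h1 h2; rewrite /Dv /dHf.
have c1 : {for s, continuous (fun t : R => t + os)}.
  apply: cvgD; [exact: cvg_id | exact: cvg_cst].
have c2 : {for s, continuous (fun t : R => Bi - t + om)}.
  apply: cvgD; [|exact: cvg_cst]. apply: cvgB; [exact: cvg_cst|exact: cvg_id].
have c3 : {for s, continuous (fun t : R => Bi - t)}.
  apply: cvgB; [exact: cvg_cst|exact: cvg_id].
have p1 : {for s, continuous (fun t : R => (t + os) `^ (-al))}.
  apply: (continuous_comp (f := fun t : R => t + os) (g := fun y : R => y `^ (-al))) => //.
  exact: cont_powR.
have p2 : {for s, continuous (fun t : R => (Bi - t + om) `^ (-al))}.
  apply: (continuous_comp (f := fun t : R => Bi - t + om) (g := fun y : R => y `^ (-al))) => //.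
  exact: cont_powR.
apply: cvgB.
  apply: cvgM; [exact: cvg_cst|].
  apply: cvgM; [exact: p1|].
  apply: cvgB; [exact: cvg_cst|]. apply: cvgM; [apply: cvgM; [exact: cvg_cst|exact: cvg_id]|].
  apply: cvgV; [by rewrite gt_eqF|exact: c1].
apply: cvgM; [exact: cvg_cst|].
apply: cvgM; [exact: p2|].
apply: cvgB; [exact: cvg_cst|]. apply: cvgM; [apply: cvgM; [exact: cvg_cst|exact: c3]|].
apply: cvgV; [by rewrite gt_eqF|exact: c2].
Qed.

Lemma KKTa {R : realType} (al cS cM os om Lb Bi s0 m0 : R) :
  0 < al -> al < 1 -> 0 < cS -> 0 < cM -> 0 <= os -> 0 <= om -> 0 <= Lb -> 0 < Lb + os ->
  NEP al cS cM os om Lb Bi s0 m0 -> s0 + m0 = Bi -> Lb < s0 -> 0 <= m0 -> 0 < m0 + om ->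
  0 <= Dv al cS cM os om s0 m0.
Proof.
move=> a0 a1 cS0 cM0 os0 om0 Lb0 Lbos ne E ls m00 mom.
rewrite leNgt; apply/negP => H.
have m0E : Bi - s0 = m0 by lra.
have cf := cont_Dv al cS cM os om Bi s0 ltac:(lra) ltac:(lra).
have [d d0 Hd] := cont_neg _ _ cf ltac:(by rewrite /= m0E).
have [e [e0 [ed el]]] : exists e, 0 < e /\ e <= d /\ e <= s0 - Lb.
  case: (lerP d (s0 - Lb)) => h; [exists d | exists (s0 - Lb)]; lra.
set t := s0 - e / 2.
have Dt : Dv al cS cM os om t (Bi - t) < 0.
  apply: Hd; rewrite /t.
  have -> : s0 - (s0 - e / 2) = e / 2 by ring.
  rewrite ger0_norm; lra.
have ht := pay_tan al cS cM os om t (Bi - t) s0 m0 a0 a1 cS0 cM0 os0 om0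
  ltac:(rewrite /t; lra) ltac:(rewrite /t; lra) ltac:(rewrite /t; lra) ltac:(rewrite /t; lra)
  ltac:(lra) m00 ltac:(rewrite /t; lra) ltac:(apply/eqP; rewrite /t; lra).
have hn := ne (Bi - t) t ltac:(rewrite /t; lra) ltac:(rewrite /t; lra) ltac:(lra).
have : Dv al cS cM os om t (Bi - t) * (s0 - t) < 0.
  have st : 0 < s0 - t by rewrite /t; lra.
  nra.
lra.
Qed.

Lemma KKTb {R : realType} (al cS cM os om Lb Bi s0 m0 : R) :
  0 < al -> al < 1 -> 0 < cS -> 0 < cM -> 0 <= os -> 0 <= om -> 0 <= Lb -> 0 < Lb + os ->
  NEP al cS cM os om Lb Bi s0 m0 -> s0 + m0 = Bi -> Lb <= s0 -> 0 < m0 ->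
  Dv al cS cM os om s0 m0 <= 0.
Proof.
move=> a0 a1 cS0 cM0 os0 om0 Lb0 Lbos ne E ls m00.
rewrite leNgt; apply/negP => H.
have m0E : Bi - s0 = m0 by lra.
have cf := cont_Dv al cS cM os om Bi s0 ltac:(lra) ltac:(lra).
have [d d0 Hd] := cont_pos _ _ cf ltac:(by rewrite /= m0E).
have [e [e0 [ed el]]] : exists e, 0 < e /\ e <= d /\ e <= m0.
  case: (lerP d m0) => h; [exists d | exists m0]; lra.
set t := s0 + e / 2.
have Dt : 0 < Dv al cS cM os om t (Bi - t).
  apply: Hd; rewrite /t.
  have -> : s0 - (s0 + e / 2) = - (e / 2) by ring.
  rewrite normrN ger0_norm; lra.
have ht := pay_tan al cS cM os om t (Bi - t) s0 m0 a0 a1 cS0 cM0 os0 om0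
  ltac:(rewrite /t; lra) ltac:(rewrite /t; lra) ltac:(rewrite /t; lra) ltac:(rewrite /t; lra)
  ltac:(lra) ltac:(lra) ltac:(rewrite /t; lra) ltac:(apply/eqP; rewrite /t; lra).
have hn := ne (Bi - t) t ltac:(rewrite /t; lra) ltac:(rewrite /t; lra) ltac:(lra).
have : Dv al cS cM os om t (Bi - t) * (s0 - t) < 0.
  have st : s0 - t < 0 by rewrite /t; lra.
  nra.
lra.
Qed.

Lemma full_use {R : realType} (al cS cM os om Lb Bi s0 m0 : R) :
  0 < al -> al < 1 -> 0 < cS -> 0 < cM -> 0 <= om ->
  NEP al cS cM os om Lb Bi s0 m0 -> Lb <= s0 -> 0 <= m0 -> m0 + s0 <= Bi -> s0 + m0 = Bi.
Proof.
move=> a0 a1 cS0 cM0 om0 ne ls m00 le.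
apply/eqP; rewrite eq_le; apply/andP; split; first lra.
rewrite leNgt; apply/negP => H.
set m' := Bi - s0.
have hn := ne m' s0 ltac:(rewrite /m'; lra) ls ltac:(rewrite /m'; lra).
have mp : 0 < m' + om by rewrite /m'; lra.
have h := Htan al om m' m0 a0 a1 om0 m00 ltac:(rewrite /m'; lra) mp ltac:(apply/eqP; rewrite /m'; lra).
have dp : 0 < dHf al om m'.
  rewrite /dHf; apply: mulr_gt0; first exact: powR_gt0.
  rewrite subr_gt0 ltr_pdivrMr // mul1r.
  have : 0 <= m' by rewrite /m'; lra.
  nra.
have st : m0 - m' < 0 by rewrite /m'; lra.
have : dHf al om m' * (m0 - m') < 0 by nra.
move: hn; rewrite /pay => hn hneg.
have : cM * Hf al om m0 < cM * Hf al om m' by rewrite ltr_pM2l //; lra.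
lra.
Qed.

Lemma X_pos {R : realType} (al cS cM os Lb Bi s0 : R) :
  0 < al -> al < 1 -> 0 < cS -> 0 < cM -> 0 <= os -> 0 <= Lb -> 0 < Lb + os ->
  NEP al cS cM os 0 Lb Bi s0 0 -> s0 = Bi -> Lb < s0 -> False.
Proof.
move=> a0 a1 cS0 cM0 os0 Lb0 Lbos ne E ls.
set K0 := cS * (Lb + os) `^ (- al).
have K00 : 0 < K0 by rewrite /K0 mulr_gt0 // powR_gt0.
set V := (K0 + 1) / (cM * (1 - al)).
have V0 : 0 < V by rewrite /V divr_gt0 //; [lra | rewrite mulr_gt0 //; lra].
set e0 := V `^ (- al^-1).
have e00 : 0 < e0 by rewrite /e0 powR_gt0.
have e0E : e0 `^ (- al) = V.
  rewrite /e0 -powRrM mulrNN mulVf ?gt_eqF // powRr1 //; lra.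
have [e [e0' [ee el]]] : exists e, 0 < e /\ e <= e0 /\ e <= s0 - Lb.
  case: (lerP e0 (s0 - Lb)) => h; [exists e0 | exists (s0 - Lb)]; lra.
set t := s0 - e.
have eV : V <= e `^ (- al) by rewrite -e0E; apply: powR_ledec => //; lra.
have Dt : Dv al cS cM os 0 t (Bi - t) < 0.
  rewrite /Dv /dHf -E /t.
  have -> : s0 - (s0 - e) + 0 = e by ring.
  have -> : s0 - (s0 - e) = e by ring.
  rewrite mulfK ?gt_eqF // -[al * (s0 - e) / _]mulrA.
  have p1 : (s0 - e + os) `^ (- al) <= (Lb + os) `^ (- al).
    apply: powR_ledec; lra.
  have q0 : 0 <= (s0 - e) / (s0 - e + os) by apply: divr_ge0; lra.
  have q1 : (s0 - e) / (s0 - e + os) <= 1 by rewrite ler_pdivrMr ?mul1r; lra.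
  have pp : 0 < (s0 - e + os) `^ (- al) by apply: powR_gt0; lra.
  have h1 : cS * ((s0 - e + os) `^ (- al) * (1 - al * (s0 - e) / (s0 - e + os))) <= K0.
    rewrite /K0 ler_pM2l // -mulrA.
    have : 0 <= al * ((s0 - e) / (s0 - e + os)) by apply: mulr_ge0; lra.
    nra.
  have h2 : cM * (e `^ (- al) * (1 - al)) >= K0 + 1.
    have -> : K0 + 1 = cM * (V * (1 - al)) by rewrite /V; field; apply/andP; split; rewrite gt_eqF //; lra.
    rewrite ler_pM2l // ler_pM2r //; lra.
  lra.
have ht := pay_tan al cS cM os 0 t (Bi - t) s0 0 a0 a1 cS0 cM0 os0 (lexx 0)
  ltac:(rewrite /t; lra) ltac:(rewrite /t; lra) ltac:(rewrite /t; lra) ltac:(rewrite /t; lra)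
  ltac:(lra) (lexx 0) ltac:(rewrite /t; lra) ltac:(apply/eqP; rewrite /t; lra).
have hn := ne (Bi - t) t ltac:(rewrite /t; lra) ltac:(rewrite /t; lra) ltac:(lra).
have : Dv al cS cM os 0 t (Bi - t) * (s0 - t) < 0.
  have st : 0 < s0 - t by rewrite /t; lra.
  nra.
lra.
Qed.


Definition kS {R : realType} (R0 lamS Nf : R) := lamS * R0 / Nf.
Definition kM {R : realType} (R0 Nm : R) := R0 / Nm.
Definition cS {R : realType} (al R0 lamS Nf : R) := lamS * (kS R0 lamS Nf) `^ (- al).
Definition cM {R : realType} (al R0 Nm : R) := (kM R0 Nm) `^ (- al).
Definition PP {R : realType} (al R0 lamS Nf Y : R) := cS al R0 lamS Nf * Y `^ (- al).
Definition QQ {R : realType} (al R0 Nm X : R) := cM al R0 Nm * X `^ (- al).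
Definition swf {R : realType} (al R0 lamS Nm Nf X Y : R) :=
  Nm * util al (rateM R0 Nm X) + Nf * util al (rateS R0 lamS Nf Y).

Lemma powRM' {R : realType} (k Y e : R) : 0 <= k -> 0 <= Y -> (k * Y) `^ e = k `^ e * Y `^ e.
Proof. by move=> k0 Y0; rewrite powRM. Qed.

Lemma payoff1_eq {R : realType} (al R0 lamS Nm Nf m1 s1 m2 s2 : R) :
  0 < R0 -> 0 < lamS -> 0 < Nm -> 0 < Nf -> 0 <= s1 + s2 -> 0 <= m1 + m2 ->
  payoff1 al R0 lamS Nm Nf (Alloc m1 s1 m2 s2) =
  R0 * pay al (cS al R0 lamS Nf) (cM al R0 Nm) s2 m2 s1 m1.
Proof.
move=> R00 l0 Nm0 Nf0 sp mp.
rewrite /payoff1 /pay /Hf /cS /cM /RS_of /RM_of /rateS /rateM /kS /kM /=.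
have -> : lamS * (s1 + s2) * R0 / Nf = (lamS * R0 / Nf) * (s1 + s2) by field; rewrite gt_eqF.
have -> : (m1 + m2) * R0 / Nm = (R0 / Nm) * (m1 + m2) by field; rewrite gt_eqF.
have k1 : 0 <= lamS * R0 / Nf by apply: divr_ge0; [apply: mulr_ge0|]; apply/ltW.
have k2 : 0 <= R0 / Nm by apply: divr_ge0; apply/ltW.
rewrite (powRM' _ _ _ k1 sp) (powRM' _ _ _ k2 mp); ring.
Qed.

Lemma payoff2_eq {R : realType} (al R0 lamS Nm Nf m1 s1 m2 s2 : R) :
  0 < R0 -> 0 < lamS -> 0 < Nm -> 0 < Nf -> 0 <= s1 + s2 -> 0 <= m1 + m2 ->
  payoff2 al R0 lamS Nm Nf (Alloc m1 s1 m2 s2) =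
  R0 * pay al (cS al R0 lamS Nf) (cM al R0 Nm) s1 m1 s2 m2.
Proof.
move=> R00 l0 Nm0 Nf0 sp mp.
rewrite /payoff2 /pay /Hf /cS /cM /RS_of /RM_of /rateS /rateM /kS /kM /=.
have -> : lamS * (s1 + s2) * R0 / Nf = (lamS * R0 / Nf) * (s2 + s1) by field; rewrite gt_eqF.
have -> : (m1 + m2) * R0 / Nm = (R0 / Nm) * (m2 + m1) by field; rewrite gt_eqF.
have k1 : 0 <= lamS * R0 / Nf by apply: divr_ge0; [apply: mulr_ge0|]; apply/ltW.
have k2 : 0 <= R0 / Nm by apply: divr_ge0; apply/ltW.
have sp' : 0 <= s2 + s1 by rewrite addrC.
have mp' : 0 <= m2 + m1 by rewrite addrC.
rewrite (powRM' _ _ _ k1 sp') (powRM' _ _ _ k2 mp'); ring.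
Qed.

Lemma Dv_PQ {R : realType} (al R0 lamS Nm Nf os om s m : R) :
  Dv al (cS al R0 lamS Nf) (cM al R0 Nm) os om s m =
  PP al R0 lamS Nf (s + os) * (1 - al * s / (s + os)) - QQ al R0 Nm (m + om) * (1 - al * m / (m + om)).
Proof. by rewrite /Dv /dHf /PP /QQ !mulrA. Qed.

Lemma cS_gt0 {R : realType} (al R0 lamS Nf : R) : 0 < R0 -> 0 < lamS -> 0 < Nf -> 0 < cS al R0 lamS Nf.
Proof. by move=> *; rewrite /cS /kS mulr_gt0 // powR_gt0 // divr_gt0 // mulr_gt0. Qed.

Lemma cM_gt0 {R : realType} (al R0 Nm : R) : 0 < R0 -> 0 < Nm -> 0 < cM al R0 Nm.
Proof. by move=> *; rewrite /cM /kM powR_gt0 // divr_gt0. Qed.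

Lemma powR_ltdec_iff {R : realType} (e u v : R) : e < 0 -> 0 < u -> 0 < v ->
  (u `^ e < v `^ e <-> v < u).
Proof.
move=> e0 u0 v0; split => h; last exact: powR_ltdec.
rewrite ltNge; apply/negP => h'.
have := powR_ledec _ _ _ e0 u0 h'; lra.
Qed.

Lemma PQ_lemma {R : realType} (al R0 lamS Nm Nf X Y : R) :
  0 < al -> al < 1 -> 0 < R0 -> 1 < lamS -> 0 < Nm -> 0 < Nf -> 0 < X -> 0 < Y ->
  (PP al R0 lamS Nf Y < QQ al R0 Nm X <-> a_const al lamS Nf * X < Nm * Y) /\
  (QQ al R0 Nm X < PP al R0 lamS Nf Y <-> Nm * Y < a_const al lamS Nf * X).
Proof.
move=> a0 a1 R00 l1 Nm0 Nf0 X0 Y0.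
have l0 : 0 < lamS by lra.
set L := lamS `^ (al^-1 - 1).
have L0 : 0 < L by rewrite /L powR_gt0.
set W := lamS `^ (- al^-1) * (kS R0 lamS Nf * Y).
set V := kM R0 Nm * X.
have kS0 : 0 < kS R0 lamS Nf by rewrite /kS divr_gt0 // mulr_gt0.
have kM0 : 0 < kM R0 Nm by rewrite /kM divr_gt0.
have PE : PP al R0 lamS Nf Y = W `^ (- al).
  rewrite /W /PP /cS powRM ?powR_ge0 //; last by apply: mulr_ge0; apply: ltW.
  rewrite powRM ?ltW // -powRrM mulrNN mulVf ?gt_eqF // powRr1 ?ltW //; ring.
have QE : QQ al R0 Nm X = V `^ (- al) by rewrite /QQ /cM /V powRM ?ltW.
have LE : lamS `^ (- al^-1) * lamS = L^-1.
  rewrite /L -powRN.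
  have -> : - (al^-1 - 1) = - al^-1 + 1 by ring.
  rewrite powRD ?powRr1 ?ltW //; by apply/implyP => _; rewrite gt_eqF.
have WE : W = L^-1 * R0 / Nf * Y by rewrite /W /kS -LE; field; rewrite gt_eqF.
have DE : W - V = R0 / (Nm * Nf * L) * (Nm * Y - a_const al lamS Nf * X).
  rewrite WE /V /kM /a_const -/L; field.
  by rewrite !gt_eqF.
have c0 : 0 < R0 / (Nm * Nf * L) by rewrite divr_gt0 // !mulr_gt0.
have W0 : 0 < W by rewrite /W mulr_gt0 ?powR_gt0 // mulr_gt0.
have V0 : 0 < V by rewrite /V mulr_gt0.
rewrite PE QE !powR_ltdec_iff ?oppr_lt0 //.
split; split => h.
- have : 0 < W - V by lra.
  rewrite DE pmulr_rgt0 //; lra.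
- have : 0 < W - V by rewrite DE pmulr_rgt0 //; lra.
  lra.
- have : W - V < 0 by lra.
  rewrite DE pmulr_rlt0 //; lra.
- have : W - V < 0 by rewrite DE pmulr_rlt0 //; lra.
  lra.
Qed.


Lemma utan {R : realType} (al N k X0 X : R) : 0 < al -> al < 1 -> 0 < N -> 0 < k -> 0 < X0 -> 0 <= X ->
  N * util al (k * X) <= N * util al (k * X0) + N * k * (k * X0) `^ (- al) * (X - X0) /\
  (X != X0 -> N * util al (k * X) < N * util al (k * X0) + N * k * (k * X0) `^ (- al) * (X - X0)).
Proof.
move=> a0 a1 N0 k0 X00 X0'.
rewrite /util.
have E : forall A A0 : R, N * (A0 / (1 - al)) + N * k * (k * X0) `^ (- al) * (X - X0) - N * (A / (1 - al))
   = N / (1 - al) * (A0 + (1 - al) * (k * X0) `^ (- al) * (k * X - k * X0) - A).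
  by move=> A A0; field; rewrite subr_eq0 gt_eqF.
have c0 : 0 < N / (1 - al) by rewrite divr_gt0 //; lra.
have E1 : 1 - al - 1 = - al by ring.
split.
  have h := T1 (1 - al) (k * X0) (k * X) ltac:(lra) ltac:(lra) ltac:(by rewrite mulr_gt0) ltac:(by rewrite mulr_ge0 // ltW).
  rewrite E1 in h.
  have := E ((k * X) `^ (1 - al)) ((k * X0) `^ (1 - al)).
  have : 0 <= N / (1 - al) * ((k * X0) `^ (1 - al) + (1 - al) * (k * X0) `^ (- al) * (k * X - k * X0) - (k * X) `^ (1 - al)).
    by apply: mulr_ge0; lra.
  lra.
move=> nX.
have h := T1s (1 - al) (k * X0) (k * X) ltac:(lra) ltac:(lra) ltac:(by rewrite mulr_gt0) ltac:(by rewrite mulr_ge0 // ltW)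
  ltac:(by apply: contra nX => /eqP h; apply/eqP; apply: (mulfI (x:=k)); rewrite ?gt_eqF).
rewrite E1 in h.
have := E ((k * X) `^ (1 - al)) ((k * X0) `^ (1 - al)).
have : 0 < N / (1 - al) * ((k * X0) `^ (1 - al) + (1 - al) * (k * X0) `^ (- al) * (k * X - k * X0) - (k * X) `^ (1 - al)).
  by apply: mulr_gt0; lra.
lra.
Qed.

Lemma swtan {R : realType} (al R0 lamS Nm Nf X0 Y0 X Y : R) :
  0 < al -> al < 1 -> 0 < R0 -> 0 < lamS -> 0 < Nm -> 0 < Nf -> 0 < X0 -> 0 < Y0 -> 0 <= X -> 0 <= Y ->
  swf al R0 lamS Nm Nf X Y <= swf al R0 lamS Nm Nf X0 Y0
     + R0 * QQ al R0 Nm X0 * (X - X0) + R0 * PP al R0 lamS Nf Y0 * (Y - Y0) /\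
  (X != X0 \/ Y != Y0 -> swf al R0 lamS Nm Nf X Y < swf al R0 lamS Nm Nf X0 Y0
     + R0 * QQ al R0 Nm X0 * (X - X0) + R0 * PP al R0 lamS Nf Y0 * (Y - Y0)).
Proof.
move=> a0 a1 R00 l0 Nm0 Nf0 X00 Y00 X0' Y0'.
have kS0 : 0 < kS R0 lamS Nf by rewrite /kS divr_gt0 // mulr_gt0.
have kM0 : 0 < kM R0 Nm by rewrite /kM divr_gt0.
have rM : forall Z, rateM R0 Nm Z = kM R0 Nm * Z by move=> Z; rewrite /rateM /kM; field; rewrite gt_eqF.
have rS : forall Z, rateS R0 lamS Nf Z = kS R0 lamS Nf * Z by move=> Z; rewrite /rateS /kS; field; rewrite gt_eqF.
have [hM1 hM2] := utan al Nm (kM R0 Nm) X0 X a0 a1 Nm0 kM0 X00 X0'.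
have [hS1 hS2] := utan al Nf (kS R0 lamS Nf) Y0 Y a0 a1 Nf0 kS0 Y00 Y0'.
have QE : Nm * kM R0 Nm * (kM R0 Nm * X0) `^ (- al) = R0 * QQ al R0 Nm X0.
  by rewrite /QQ /cM powRM ?ltW // /kM; field; rewrite gt_eqF.
have PE : Nf * kS R0 lamS Nf * (kS R0 lamS Nf * Y0) `^ (- al) = R0 * PP al R0 lamS Nf Y0.
  by rewrite /PP /cS powRM ?ltW // /kS; field; rewrite gt_eqF.
rewrite QE in hM1 hM2; rewrite PE in hS1 hS2.
rewrite /swf !rM !rS.
split; first lra.
case=> h; [have := hM2 h | have := hS2 h]; lra.
Qed.

Lemma cond_eq {R : realType} (al R0 lamS Nm Nf Bo1 Bo2 Bn1 Bn2 Bni Boi : R) :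
  0 < al -> 0 < R0 -> 0 < lamS -> 0 < Nm -> 0 < Nf -> 0 < Bn1 + Bn2 -> 0 < Bo1 + Bo2 ->
  (cond_i al R0 lamS Nm Nf Bo1 Bo2 Bn1 Bn2 Bni Boi <->
   PP al R0 lamS Nf (Bn1 + Bn2) * (1 - al * Bni / (Bn1 + Bn2))
   - QQ al R0 Nm (Bo1 + Bo2) * (1 - al * Boi / (Bo1 + Bo2)) <= 0).
Proof.
move=> a0 R00 l0 Nm0 Nf0 B0 Bo0.
have kS0 : 0 < kS R0 lamS Nf by rewrite /kS divr_gt0 // mulr_gt0.
have kM0 : 0 < kM R0 Nm by rewrite /kM divr_gt0.
have E1 : RS0 R0 lamS Nf Bn1 Bn2 = kS R0 lamS Nf * (Bn1 + Bn2).
  by rewrite /RS0 /kS; field; rewrite gt_eqF.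
have E2 : RM0 R0 Nm Bo1 Bo2 = kM R0 Nm * (Bo1 + Bo2).
  by rewrite /RM0 /kM; field; rewrite gt_eqF.
rewrite /cond_i E1 E2.
rewrite (powRm1 al _ (mulr_gt0 kS0 B0)) (powRm1 al _ (mulr_gt0 kM0 Bo0)).
rewrite /PP /QQ /cS /cM (powRM _ (ltW kS0) (ltW B0)) (powRM _ (ltW kM0) (ltW Bo0)).
set u := kS R0 lamS Nf `^ (- al).
set v := (Bn1 + Bn2) `^ (- al).
set u' := kM R0 Nm `^ (- al).
set v' := (Bo1 + Bo2) `^ (- al).
suff -> : lamS * (u * v) - u' * v' - al * lamS ^+ 2 * Bni * R0 / Nf * (u * v / (kS R0 lamS Nf * (Bn1 + Bn2))) +
  al * Boi * R0 / Nm * (u' * v' / (kM R0 Nm * (Bo1 + Bo2))) =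
  lamS * u * v * (1 - al * Bni / (Bn1 + Bn2)) - u' * v' * (1 - al * Boi / (Bo1 + Bo2)) by [].
rewrite /kS /kM; field.
by rewrite !gt_eqF.
Qed.

Lemma sup_eq {R : realType} (S : set R) (x : R) : S x -> (forall y, S y -> y <= x) -> sup S = x.
Proof.
move=> Sx ub.
apply/eqP; rewrite eq_le; apply/andP; split.
  by apply: ge_sup; [exists x | move=> y /ub].
by apply: ub_le_sup => //; exists x => y /ub.
Qed.

Lemma sup_ge {R : realType} (S : set R) (x b : R) : S x -> (forall y, S y -> y <= b) -> x <= sup S.
Proof. by move=> Sx ub; apply: ub_le_sup => //; exists b => y /ub. Qed.


Lemma div_le_div {R : realType} (c u v : R) : 0 <= c -> 0 < u -> u <= v -> c / v <= c / u.
Proof.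
move=> c0 u0 uv.
have v0 : 0 < v by lra.
rewrite ler_pdivrMr // mulrAC ler_pdivlMr //.
by apply: ler_wpM2l.
Qed.

Lemma div_lt_div {R : realType} (c u v : R) : 0 < c -> 0 < u -> u < v -> c / v < c / u.
Proof.
move=> c0 u0 uv.
have v0 : 0 < v by lra.
rewrite ltr_pdivrMr // mulrAC ltr_pdivlMr //.
by rewrite ltr_pM2l.
Qed.

Lemma chain1 {R : realType} (al P Q P0 Q0 X Y B Bo Bni Boi : R) :
  0 < al -> al < 1 -> 0 < P -> P < P0 -> 0 < Q0 -> Q0 < Q -> 0 < X -> X < Bo -> 0 < B -> B < Y ->
  0 <= Bni -> 0 < Boi ->
  P * (1 - al * (Y - Bni) / Y) - Q * (1 - al * (X - Boi) / X) <
  P0 * (1 - al * (B - Bni) / B) - Q0 * (1 - al * (Bo - Boi) / Bo).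
Proof.
move=> a0 a1 P0' PP0 Q00 QQ0 X0 XBo B0 BY Bn0 Bo0.
have Y0 : 0 < Y by lra.
have Bo0' : 0 < Bo by lra.
have -> : 1 - al * (Y - Bni) / Y = 1 - al + al * (Bni / Y) by field; rewrite gt_eqF.
have -> : 1 - al * (X - Boi) / X = 1 - al + al * (Boi / X) by field; rewrite gt_eqF.
have -> : 1 - al * (B - Bni) / B = 1 - al + al * (Bni / B) by field; rewrite gt_eqF.
have -> : 1 - al * (Bo - Boi) / Bo = 1 - al + al * (Boi / Bo) by field; rewrite gt_eqF.
have h1 : Bni / Y <= Bni / B by apply: div_le_div => //; lra.
have h2 : Boi / Bo < Boi / X by apply: div_lt_div.
have h3 : 0 <= Bni / Y by apply: divr_ge0; lra.
have h4 : 0 <= Boi / Bo by apply: divr_ge0; lra.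
set A := 1 - al + al * (Bni / Y).
set A0 := 1 - al + al * (Bni / B).
set C := 1 - al + al * (Boi / X).
set C0 := 1 - al + al * (Boi / Bo).
have A0' : 0 < A by rewrite /A; nra.
have AA0 : A <= A0 by rewrite /A /A0; nra.
have C0' : 0 < C0 by rewrite /C0; nra.
have CC0 : C0 < C by rewrite /C /C0; nra.
have k1 : P * A < P0 * A by rewrite ltr_pM2r.
have k2 : P0 * A <= P0 * A0 by rewrite ler_pM2l //; lra.
have k3 : Q0 * C0 < Q * C0 by rewrite ltr_pM2r.
have k4 : Q * C0 <= Q * C by rewrite ler_pM2l //; lra.
lra.
Qed.

Lemma case1_half {R : realType} (al P Q P0 Q0 X Y B Bo si mi sj mj Bni Boi Bnj Boj : R) :
  0 < al -> al < 1 -> 0 < P -> P < P0 -> 0 < Q0 -> Q0 < Q -> 0 < X -> X < Bo -> 0 < B -> B < Y ->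
  si + sj = Y -> mi + mj = X -> si + mi = Boi + Bni -> Bni + Bnj = B -> Boi + Boj = Bo ->
  0 <= Bni -> 0 < Boi -> Bni <= si ->
  (Bni < si -> 0 <= P * (1 - al * si / Y) - Q * (1 - al * mi / X)) ->
  (Bnj < sj -> 0 <= P * (1 - al * sj / Y) - Q * (1 - al * mj / X)) ->
  P0 * (1 - al * Bnj / B) - Q0 * (1 - al * Boj / Bo) <= 0 ->
  P * (1 - al * si / Y) - Q * (1 - al * mi / X) < 0 -> False.
Proof.
move=> a0 a1 P0' PP0 Q00 QQ0 X0 XBo B0 BY sE mE iE BnE BoE Bn0 Bo0 ls Ki Kj cj Di.
have si_eq : si = Bni.
  apply/eqP; rewrite eq_le ls andbT leNgt; apply/negP => h.
  have := Ki h; lra.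
have mi_eq : mi = Boi by lra.
have hj : Bnj < sj by lra.
have Dj := Kj hj.
have sjE : sj = Y - Bni by lra.
have mjE : mj = X - Boi by lra.
have BnjE : Bnj = B - Bni by lra.
have BojE : Boj = Bo - Boi by lra.
rewrite sjE mjE in Dj; rewrite BnjE BojE in cj.
have := chain1 al P Q P0 Q0 X Y B Bo Bni Boi a0 a1 P0' PP0 Q00 QQ0 X0 XBo B0 BY Bn0 Bo0.
lra.
Qed.

Lemma sumD {R : realType} (al P Q X Y si sj mi mj : R) : 0 < X -> 0 < Y -> si + sj = Y -> mi + mj = X ->
  (P * (1 - al * si / Y) - Q * (1 - al * mi / X)) + (P * (1 - al * sj / Y) - Q * (1 - al * mj / X))
  = (2 - al) * (P - Q).
Proof.
move=> X0 Y0 sE mE.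
have -> : sj = Y - si by lra.
have -> : mj = X - mi by lra.
by field; apply/andP; split; rewrite gt_eqF.
Qed.

Lemma case2_gt_half {R : realType} (al P Q X Y B si mi sj mj Bni Boi Bnj Boj : R) :
  0 < al -> al < 1 -> 0 < P -> P < Q -> 0 < X -> 0 < Y -> B < Y ->
  si + sj = Y -> mi + mj = X -> si + mi = Boi + Bni -> Bni + Bnj = B ->
  0 <= Bni -> Bni <= si -> Bni * X < Boi * Y ->
  (Bni < si -> 0 <= P * (1 - al * si / Y) - Q * (1 - al * mi / X)) ->
  (Bnj < sj -> 0 <= P * (1 - al * sj / Y) - Q * (1 - al * mj / X)) ->
  P * (1 - al * si / Y) - Q * (1 - al * mi / X) < 0 -> False.
Proof.
move=> a0 a1 P0 PQ X0 Y0 BY sE mE iE BnE Bn0 ls hXY Ki Kj Di.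
have si_eq : si = Bni.
  apply/eqP; rewrite eq_le ls andbT leNgt; apply/negP => h.
  have := Ki h; lra.
have mi_eq : mi = Boi by lra.
have sjE : sj = Y - Bni by lra.
have mjE : mj = X - Boi by lra.
have Dj : P * (1 - al * sj / Y) - Q * (1 - al * mj / X) < 0.
  rewrite sjE mjE.
  have -> : 1 - al * (Y - Bni) / Y = 1 - al + al * (Bni / Y) by field; rewrite gt_eqF.
  have -> : 1 - al * (X - Boi) / X = 1 - al + al * (Boi / X) by field; rewrite gt_eqF.
  have h1 : Bni / Y < Boi / X.
    rewrite ltr_pdivrMr // mulrAC ltr_pdivlMr //; lra.
  have h3 : 0 <= Bni / Y by apply: divr_ge0; lra.
  set A := 1 - al + al * (Bni / Y).
  set C := 1 - al + al * (Boi / X).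
  have A0 : 0 < A by rewrite /A; nra.
  have AC : A < C by rewrite /A /C; nra.
  have k1 : P * A < Q * A by rewrite ltr_pM2r.
  have k2 : Q * A < Q * C by rewrite ltr_pM2l //; lra.
  lra.
have : ~ (Bnj < sj) by move=> h; have := Kj h; lra.
lra.
Qed.

Lemma case2_lt_half {R : realType} (al P Q X Y si mi sj mj : R) :
  0 < al -> al < 1 -> 0 < Q -> Q < P -> 0 < X -> 0 < Y ->
  si + sj = Y -> mi + mj = X -> 0 <= mi -> 0 <= si -> 0 <= sj ->
  (0 < mi -> P * (1 - al * si / Y) - Q * (1 - al * mi / X) <= 0) ->
  (0 < mj -> P * (1 - al * sj / Y) - Q * (1 - al * mj / X) <= 0) ->
  0 < P * (1 - al * si / Y) - Q * (1 - al * mi / X) -> False.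
Proof.
move=> a0 a1 Q0 QP X0 Y0 sE mE mi0 si0 sj0 Ki Kj Di.
have mi_eq : mi = 0.
  apply/eqP; rewrite eq_le mi0 andbT leNgt; apply/negP => h.
  have := Ki h; lra.
have mjE : mj = X by lra.
have Dj := Kj ltac:(lra).
rewrite mjE mulfK ?gt_eqF // in Dj.
have h1 : sj / Y <= 1 by rewrite ler_pdivrMr // mul1r; lra.
have h3 : 0 <= sj / Y by apply: divr_ge0; lra.
rewrite -mulrA in Dj.
set A := 1 - al * (sj / Y) in Dj.
have A1 : 1 - al <= A by rewrite /A; nra.
have k1 : P * (1 - al) <= P * A by rewrite ler_pM2l //; lra.
have k2 : Q * (1 - al) < P * (1 - al) by rewrite ltr_pM2r //; lra.
lra.
Qed.

Lemma case2_fwd_half {R : realType} (al P X Y si mi : R) :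
  0 < al -> 0 < P -> 0 < X -> 0 < Y -> 0 <= si -> 0 <= mi ->
  (0 < mi -> P * (1 - al * si / Y) - P * (1 - al * mi / X) <= 0) ->
  mi * Y <= si * X.
Proof.
move=> a0 P0 X0 Y0 si0 mi0 K.
rewrite leNgt; apply/negP => h.
have mp : 0 < mi.
  rewrite lt_neqAle mi0 andbT; apply/eqP => m0; rewrite -m0 mul0r in h.
  have : 0 <= si * X by apply: mulr_ge0; lra.
  lra.
have := K mp.
have -> : P * (1 - al * si / Y) - P * (1 - al * mi / X) = P * al / (X * Y) * (mi * Y - si * X).
  by field; apply/andP; split; rewrite gt_eqF.
have : 0 < P * al / (X * Y) * (mi * Y - si * X).
  apply: mulr_gt0; last lra.
  by apply: divr_gt0; apply: mulr_gt0.
lra.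
Qed.


Lemma NE_struct {R : realType} (al R0 lamS Nm Nf Bo1 Bo2 Bn1 Bn2 m1 s1 m2 s2 : R) :
  0 < al -> al < 1 -> 0 < R0 -> 1 < lamS -> 0 < Nm -> 0 < Nf ->
  0 < Bo1 -> 0 < Bo2 -> 0 <= Bn1 -> 0 <= Bn2 -> 0 < Bn1 + Bn2 ->
  is_NE_w al R0 lamS Nm Nf Bo1 Bo2 Bn1 Bn2 (Alloc m1 s1 m2 s2) ->
  0 <= m1 /\ 0 <= m2 /\ Bn1 <= s1 /\ Bn2 <= s2 /\
      s1 + m1 = Bo1 + Bn1 /\ s2 + m2 = Bo2 + Bn2 /\ 0 < m1 + m2 /\
      NEP al (cS al R0 lamS Nf) (cM al R0 Nm) s2 m2 Bn1 (Bo1 + Bn1) s1 m1 /\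
      NEP al (cS al R0 lamS Nf) (cM al R0 Nm) s1 m1 Bn2 (Bo2 + Bn2) s2 m2.
Proof.
move=> a0 a1 R00 l1 Nm0 Nf0 Bo10 Bo20 Bn10 Bn20 B0.
case=> [[[/= hm1 [hs1 hb1]] [/= hm2 [hs2 hb2]]] [H1 H2]].
have l0 : 0 < lamS by lra.
have cS0 := cS_gt0 al R0 lamS Nf R00 l0 Nf0.
have cM0 := cM_gt0 al R0 Nm R00 Nm0.
have N1 : NEP al (cS al R0 lamS Nf) (cM al R0 Nm) s2 m2 Bn1 (Bo1 + Bn1) s1 m1.
  move=> m s hm hs hb.
  have := H1 m s (conj hm (conj hs hb)).
  rewrite /= !payoff1_eq //; try lra.
  by rewrite ler_pM2l.
have N2 : NEP al (cS al R0 lamS Nf) (cM al R0 Nm) s1 m1 Bn2 (Bo2 + Bn2) s2 m2.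
  move=> m s hm hs hb.
  have := H2 m s (conj hm (conj hs hb)).
  rewrite /= !payoff2_eq //; try lra.
  by rewrite ler_pM2l.
have F1 := full_use al _ _ s2 m2 Bn1 (Bo1 + Bn1) s1 m1 a0 a1 cS0 cM0 hm2 N1 hs1 hm1 hb1.
have F2 := full_use al _ _ s1 m1 Bn2 (Bo2 + Bn2) s2 m2 a0 a1 cS0 cM0 hm1 N2 hs2 hm2 hb2.
do 6 (split => //); split; last by split.
rewrite lt_neqAle addr_ge0 // andbT; apply/eqP => X0.
have m10 : m1 = 0 by lra.
have m20 : m2 = 0 by lra.
rewrite m10 m20 in N1.
apply: (X_pos al _ _ s2 Bn1 (Bo1 + Bn1) s1 a0 a1 cS0 cM0 _ Bn10 _ N1); lra.
Qed.


Lemma cf_uf {R : realType} (B1 L1 B2 L2 : R) (p : alloc R) : 0 <= L1 -> 0 <= L2 ->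
  alloc_feasible B1 L1 B2 L2 p -> alloc_feasible B1 0 B2 0 p.
Proof.
move=> l1 l2 [[h1 [h2 h3]] [h4 [h5 h6]]].
split; split => //; split => //; lra.
Qed.

Lemma PP_dec {R : realType} (al R0 lamS Nf Y1 Y2 : R) : 0 < al -> 0 < R0 -> 0 < lamS -> 0 < Nf ->
  0 < Y1 -> Y1 < Y2 -> PP al R0 lamS Nf Y2 < PP al R0 lamS Nf Y1.
Proof.
move=> a0 R00 l0 Nf0 Y0 Y12; rewrite /PP ltr_pM2l ?cS_gt0 //.
by apply: powR_ltdec => //; rewrite oppr_lt0.
Qed.

Lemma QQ_dec {R : realType} (al R0 Nm X1 X2 : R) : 0 < al -> 0 < R0 -> 0 < Nm ->
  0 < X1 -> X1 < X2 -> QQ al R0 Nm X2 < QQ al R0 Nm X1.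
Proof.
move=> a0 R00 Nm0 X0 X12; rewrite /QQ ltr_pM2l ?cM_gt0 //.
by apply: powR_ltdec => //; rewrite oppr_lt0.
Qed.

Lemma PP_gt0 {R : realType} (al R0 lamS Nf Y : R) : 0 < R0 -> 0 < lamS -> 0 < Nf -> 0 < Y ->
  0 < PP al R0 lamS Nf Y.
Proof. by move=> *; rewrite /PP mulr_gt0 ?cS_gt0 ?powR_gt0. Qed.

Lemma QQ_gt0 {R : realType} (al R0 Nm X : R) : 0 < R0 -> 0 < Nm -> 0 < X -> 0 < QQ al R0 Nm X.
Proof. by move=> *; rewrite /QQ mulr_gt0 ?cM_gt0 ?powR_gt0. Qed.

Lemma fwd_alg {R : realType} (Bni Boi si mi Xs Ys Nm a Bt : R) :
  0 < Bt -> 0 < Nm + a -> Xs + Ys = Bt -> Ys * (Nm + a) = a * Bt -> mi * Ys = si * Xs ->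
  si + mi = Boi + Bni -> Bni <= si -> Bni * Nm <= Boi * a.
Proof.
move=> Bt0 Na0 XY YsE eq F ls.
have em : mi = Boi + Bni - si by lra.
rewrite em in eq.
have h0 : (Boi + Bni) * Ys = si * Bt.
  rewrite -XY; have : (Boi + Bni - si) * Ys = si * Xs by [].
  move=> e; have -> : (Boi + Bni) * Ys = (Boi + Bni - si) * Ys + si * Ys by ring.
  rewrite e; ring.
have h1 : Bni * Bt <= si * Bt by rewrite ler_pM2r.
have h2 : Bni * Bt * (Nm + a) <= (Boi + Bni) * Ys * (Nm + a) by rewrite ler_pM2r // h0.
have h3 : (Boi + Bni) * Ys * (Nm + a) = ((Boi + Bni) * a) * Bt by rewrite -mulrA YsE; ring.
rewrite h3 in h2.
have h4 : (Bni * (Nm + a)) * Bt <= ((Boi + Bni) * a) * Bt.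
  by have -> : Bni * (Nm + a) * Bt = Bni * Bt * (Nm + a) by ring.
rewrite ler_pM2r // in h4.
lra.
Qed.

Lemma gt_alg {R : realType} (Bni Boi X Y Xs Ys Nm a : R) :
  Bni * Nm <= Boi * a -> a * Xs = Nm * Ys -> X < Xs -> Ys < Y -> 0 <= Bni -> 0 < Boi -> 0 < Nm ->
  0 < Xs -> Bni * X < Boi * Y.
Proof.
move=> c aXs XX YY Bn0 Bo0 Nm0 Xs0.
have h1 : Bni * X <= Bni * Xs by apply: ler_wpM2l => //; lra.
have h2 : Bni * Nm * Xs <= Boi * a * Xs by rewrite ler_pM2r.
have h3 : (Bni * Xs) * Nm <= (Boi * Ys) * Nm.
  have -> : Bni * Xs * Nm = Bni * Nm * Xs by ring.
  have -> : Boi * Ys * Nm = Boi * (a * Xs) by rewrite aXs; ring.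
  by rewrite mulrA.
rewrite ler_pM2r // in h3.
have h4 : Boi * Ys < Boi * Y by rewrite ltr_pM2l.
lra.
Qed.



Lemma GB_lemma {R : realType} (al R0 lamS Nm Nf Xs Ys Bt m1 s1 m2 s2 : R) :
  0 < al -> al < 1 -> 0 < R0 -> 0 < lamS -> 0 < Nm -> 0 < Nf -> 0 < Xs -> 0 < Ys ->
  Xs + Ys = Bt -> PP al R0 lamS Nf Ys = QQ al R0 Nm Xs ->
  0 <= m1 -> 0 <= m2 -> 0 <= s1 -> 0 <= s2 -> m1 + s1 + (m2 + s2) <= Bt ->
  swf al R0 lamS Nm Nf (m1 + m2) (s1 + s2) <= swf al R0 lamS Nm Nf Xs Ys /\
  (m1 + m2 != Xs \/ s1 + s2 != Ys ->
     swf al R0 lamS Nm Nf (m1 + m2) (s1 + s2) < swf al R0 lamS Nm Nf Xs Ys).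
Proof.
move=> a0 a1 R00 l0 Nm0 Nf0 XsP YsP XYs PQs hm1 hm2 hs1 hs2 hb.
have [t1 t2] := swtan al R0 lamS Nm Nf Xs Ys (m1 + m2) (s1 + s2) a0 a1 R00 l0 Nm0 Nf0 XsP YsP
  ltac:(lra) ltac:(lra).
rewrite -PQs in t1 t2.
have cP : 0 < PP al R0 lamS Nf Ys by apply: PP_gt0.
have k : R0 * PP al R0 lamS Nf Ys * (m1 + m2 - Xs) + R0 * PP al R0 lamS Nf Ys * (s1 + s2 - Ys) <= 0.
  rewrite -mulrDr; apply: mulr_ge0_le0; first by apply: mulr_ge0; lra.
  lra.
split; [lra | move=> h; have := t2 h; lra].
Qed.

Lemma CB_lemma {R : realType} (al R0 lamS Nm Nf Bo1 Bo2 Bn1 Bn2 B m1 s1 m2 s2 : R) :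
  0 < al -> al < 1 -> 0 < R0 -> 0 < lamS -> 0 < Nm -> 0 < Nf -> 0 < Bo1 + Bo2 -> 0 < B ->
  Bn1 + Bn2 = B -> PP al R0 lamS Nf B < QQ al R0 Nm (Bo1 + Bo2) ->
  0 <= m1 -> 0 <= m2 -> Bn1 <= s1 -> Bn2 <= s2 -> m1 + s1 <= Bo1 + Bn1 -> m2 + s2 <= Bo2 + Bn2 ->
  swf al R0 lamS Nm Nf (m1 + m2) (s1 + s2) <= swf al R0 lamS Nm Nf (Bo1 + Bo2) B /\
  (m1 + m2 != Bo1 + Bo2 \/ s1 + s2 != B ->
     swf al R0 lamS Nm Nf (m1 + m2) (s1 + s2) < swf al R0 lamS Nm Nf (Bo1 + Bo2) B).
Proof.
move=> a0 a1 R00 l0 Nm0 Nf0 BoP B0 BE P0Q0 hm1 hm2 hs1 hs2 hb1 hb2.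
have P00 : 0 < PP al R0 lamS Nf B by apply: PP_gt0.
have [t1 t2] := swtan al R0 lamS Nm Nf (Bo1 + Bo2) B (m1 + m2) (s1 + s2) a0 a1 R00 l0 Nm0 Nf0
  BoP B0 ltac:(lra) ltac:(lra).
move: t1 t2 P0Q0 P00.
set P0 := PP al R0 lamS Nf B.
set Q0 := QQ al R0 Nm (Bo1 + Bo2).
move=> t1 t2 P0Q0 P00.
have Q00 : 0 < Q0 by lra.
have k1 : Q0 * (m1 + m2 - (Bo1 + Bo2)) <= Q0 * (B - (s1 + s2)) by rewrite ler_pM2l //; lra.
have k2 : (Q0 - P0) * (B - (s1 + s2)) <= 0 by apply: mulr_ge0_le0; lra.
have k : R0 * Q0 * (m1 + m2 - (Bo1 + Bo2)) + R0 * P0 * (s1 + s2 - B) <= 0.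
  have -> : R0 * Q0 * (m1 + m2 - (Bo1 + Bo2)) + R0 * P0 * (s1 + s2 - B)
     = R0 * (Q0 * (m1 + m2 - (Bo1 + Bo2)) + P0 * (s1 + s2 - B)) by ring.
  apply: mulr_ge0_le0; first lra.
  have : Q0 * (B - (s1 + s2)) + P0 * (s1 + s2 - B) = (Q0 - P0) * (B - (s1 + s2)) by ring.
  lra.
split; [lra | move=> h; have := t2 h; lra].
Qed.

Lemma case1_NE {R : realType} (al R0 lamS Nm Nf Bo1 Bo2 Bn1 Bn2 B m1 s1 m2 s2 : R) :
  0 < al -> al < 1 -> 0 < R0 -> 1 < lamS -> 0 < Nm -> 0 < Nf ->
  0 < Bo1 -> 0 < Bo2 -> 0 < B -> 0 <= Bn1 -> 0 <= Bn2 -> Bn1 + Bn2 = B ->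
  PP al R0 lamS Nf B < QQ al R0 Nm (Bo1 + Bo2) ->
  is_NE_w al R0 lamS Nm Nf Bo1 Bo2 Bn1 Bn2 (Alloc m1 s1 m2 s2) ->
  ((m1 + m2 = Bo1 + Bo2 /\ s1 + s2 = B) <->
   (cond_i al R0 lamS Nm Nf Bo1 Bo2 Bn1 Bn2 Bn1 Bo1 /\
    cond_i al R0 lamS Nm Nf Bo1 Bo2 Bn1 Bn2 Bn2 Bo2)).
Proof.
move=> a0 a1 R00 l1 Nm0 Nf0 Bo10 Bo20 B0 Bn10 Bn20 BE P0Q0 Hne.
have l0 : 0 < lamS by lra.
have BoP : 0 < Bo1 + Bo2 by lra.
have cS0 := cS_gt0 al R0 lamS Nf R00 l0 Nf0.
have cM0 := cM_gt0 al R0 Nm R00 Nm0.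
have [hm1 [hm2 [hs1 [hs2 [F1 [F2 [Xp [N1 N2]]]]]]]] :=
  NE_struct al R0 lamS Nm Nf Bo1 Bo2 Bn1 Bn2 m1 s1 m2 s2 a0 a1 R00 l1 Nm0 Nf0 Bo10 Bo20 Bn10 Bn20
    ltac:(lra) Hne.
have C1 := cond_eq al R0 lamS Nm Nf Bo1 Bo2 Bn1 Bn2 Bn1 Bo1 a0 R00 l0 Nm0 Nf0 ltac:(lra) BoP.
have C2 := cond_eq al R0 lamS Nm Nf Bo1 Bo2 Bn1 Bn2 Bn2 Bo2 a0 R00 l0 Nm0 Nf0 ltac:(lra) BoP.
rewrite BE in C1 C2.
have Q00 : 0 < QQ al R0 Nm (Bo1 + Bo2) by apply: QQ_gt0.
split.
  move=> [eX eY].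
  have em1 : m1 = Bo1 by lra.
  have em2 : m2 = Bo2 by lra.
  have es1 : s1 = Bn1 by lra.
  have es2 : s2 = Bn2 by lra.
  have K1 := KKTb al _ _ s2 m2 Bn1 (Bo1 + Bn1) s1 m1 a0 a1 cS0 cM0 ltac:(lra) hm2 Bn10 ltac:(lra)
    N1 F1 hs1 ltac:(lra).
  have K2 := KKTb al _ _ s1 m1 Bn2 (Bo2 + Bn2) s2 m2 a0 a1 cS0 cM0 ltac:(lra) hm1 Bn20 ltac:(lra)
    N2 F2 hs2 ltac:(lra).
  rewrite Dv_PQ es1 es2 em1 em2 BE in K1.
  rewrite Dv_PQ es1 es2 em1 em2 (addrC Bn2 Bn1) (addrC Bo2 Bo1) BE in K2.
  by split; [apply/C1.2 | apply/C2.2].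
move=> [c1 c2].
have c1' := C1.1 c1.
have c2' := C2.1 c2.
clear C1 C2 c1 c2.
have eY : s1 + s2 = B.
  apply/eqP; rewrite eq_le; apply/andP; split; last lra.
  rewrite leNgt; apply/negP => hY.
  have Xlt : m1 + m2 < Bo1 + Bo2 by lra.
  have Yp : 0 < s1 + s2 by lra.
  have PY := PP_dec al R0 lamS Nf B (s1 + s2) a0 R00 l0 Nf0 B0 hY.
  have QX := QQ_dec al R0 Nm (m1 + m2) (Bo1 + Bo2) a0 R00 Nm0 Xp Xlt.
  have Pp := PP_gt0 al R0 lamS Nf (s1 + s2) R00 l0 Nf0 Yp.
  have Ka1 : Bn1 < s1 -> 0 <= PP al R0 lamS Nf (s1 + s2) * (1 - al * s1 / (s1 + s2))
                               - QQ al R0 Nm (m1 + m2) * (1 - al * m1 / (m1 + m2)).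
    move=> h.
    have := KKTa al _ _ s2 m2 Bn1 (Bo1 + Bn1) s1 m1 a0 a1 cS0 cM0 ltac:(lra) hm2 Bn10 ltac:(lra)
      N1 F1 h hm1 Xp.
    by rewrite Dv_PQ.
  have Ka2 : Bn2 < s2 -> 0 <= PP al R0 lamS Nf (s1 + s2) * (1 - al * s2 / (s1 + s2))
                               - QQ al R0 Nm (m1 + m2) * (1 - al * m2 / (m1 + m2)).
    move=> h.
    have := KKTa al _ _ s1 m1 Bn2 (Bo2 + Bn2) s2 m2 a0 a1 cS0 cM0 ltac:(lra) hm1 Bn20 ltac:(lra)
      N2 F2 h hm2 ltac:(lra).
    by rewrite Dv_PQ (addrC s2 s1) (addrC m2 m1).
  clear N1 N2.
  move: Ka1 Ka2 PY QX Pp c1' c2' P0Q0 Q00.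
  set P := PP al R0 lamS Nf (s1 + s2).
  set Q := QQ al R0 Nm (m1 + m2).
  set P0 := PP al R0 lamS Nf B.
  set Q0 := QQ al R0 Nm (Bo1 + Bo2).
  move=> Ka1 Ka2 PY QX Pp c1' c2' P0Q0 Q00.
  have sum := sumD al P Q (m1 + m2) (s1 + s2) s1 s2 m1 m2 Xp Yp erefl erefl.
  have neg : (2 - al) * (P - Q) < 0.
    have h2a : 0 < 2 - al by lra.
    rewrite pmulr_rlt0 //; lra.
  case: (ltP (P * (1 - al * s1 / (s1 + s2)) - Q * (1 - al * m1 / (m1 + m2))) 0) => hD1.
    exact: (case1_half al P Q P0 Q0 (m1 + m2) (s1 + s2) B (Bo1 + Bo2) s1 m1 s2 m2 Bn1 Bo1 Bn2 Bo2
      a0 a1 Pp PY Q00 QX Xp Xlt B0 hY erefl erefl ltac:(lra) ltac:(lra) ltac:(lra) Bn10 Bo10 hs1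
      Ka1 Ka2 c2' hD1).
  have hD2 : P * (1 - al * s2 / (s1 + s2)) - Q * (1 - al * m2 / (m1 + m2)) < 0 by lra.
  exact: (case1_half al P Q P0 Q0 (m1 + m2) (s1 + s2) B (Bo1 + Bo2) s2 m2 s1 m1 Bn2 Bo2 Bn1 Bo1
    a0 a1 Pp PY Q00 QX Xp Xlt B0 hY ltac:(lra) ltac:(lra) ltac:(lra) ltac:(lra) ltac:(lra) Bn20 Bo20 hs2
    Ka2 Ka1 c1' hD2).
split => //; lra.
Qed.


Lemma case2_NE {R : realType} (al R0 lamS Nm Nf Bo1 Bo2 Bn1 Bn2 B m1 s1 m2 s2 Xs Ys : R) :
  0 < al -> al < 1 -> 0 < R0 -> 1 < lamS -> 0 < Nm -> 0 < Nf ->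
  0 < Bo1 -> 0 < Bo2 -> 0 < B -> 0 <= Bn1 -> 0 <= Bn2 -> Bn1 + Bn2 = B ->
  0 < Xs -> 0 < Ys -> Xs + Ys = Bo1 + Bo2 + B -> a_const al lamS Nf * Xs = Nm * Ys -> B <= Ys ->
  PP al R0 lamS Nf Ys = QQ al R0 Nm Xs ->
  is_NE_w al R0 lamS Nm Nf Bo1 Bo2 Bn1 Bn2 (Alloc m1 s1 m2 s2) ->
  ((m1 + m2 = Xs /\ s1 + s2 = Ys) <->
   (Bn1 * Nm <= Bo1 * a_const al lamS Nf /\ Bn2 * Nm <= Bo2 * a_const al lamS Nf)).
Proof.
move=> a0 a1 R00 l1 Nm0 Nf0 Bo10 Bo20 B0 Bn10 Bn20 BE XsP YsP XYs aXs BYs PQs Hne.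
have l0 : 0 < lamS by lra.
have cS0 := cS_gt0 al R0 lamS Nf R00 l0 Nf0.
have cM0 := cM_gt0 al R0 Nm R00 Nm0.
have [hm1 [hm2 [hs1 [hs2 [F1 [F2 [Xp [N1 N2]]]]]]]] :=
  NE_struct al R0 lamS Nm Nf Bo1 Bo2 Bn1 Bn2 m1 s1 m2 s2 a0 a1 R00 l1 Nm0 Nf0 Bo10 Bo20 Bn10 Bn20
    ltac:(lra) Hne.
clear Hne.
have aP : 0 < a_const al lamS Nf by rewrite /a_const mulr_gt0 // powR_gt0.
move: aXs aP; set a := a_const al lamS Nf => aXs aP.
have BtP : 0 < Bo1 + Bo2 + B by lra.
have Nma : 0 < Nm + a by lra.
have YsE : Ys * (Nm + a) = a * (Bo1 + Bo2 + B).
  have : a * (Xs + Ys) = a * (Bo1 + Bo2 + B) by rewrite XYs.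
  have -> : Ys * (Nm + a) = Nm * Ys + a * Ys by ring.
  rewrite -aXs; move=> <-; ring.
have cP : 0 < PP al R0 lamS Nf Ys by apply: PP_gt0.
split.
  move=> [eX eY].
  have K1 := KKTb al _ _ s2 m2 Bn1 (Bo1 + Bn1) s1 m1 a0 a1 cS0 cM0 ltac:(lra) hm2 Bn10 ltac:(lra)
    N1 F1 hs1.
  have K2 := KKTb al _ _ s1 m1 Bn2 (Bo2 + Bn2) s2 m2 a0 a1 cS0 cM0 ltac:(lra) hm1 Bn20 ltac:(lra)
    N2 F2 hs2.
  rewrite Dv_PQ eY eX -PQs in K1.
  rewrite Dv_PQ (addrC s2 s1) (addrC m2 m1) eY eX -PQs in K2.
  have f1 := case2_fwd_half al _ Xs Ys s1 m1 a0 cP XsP YsP ltac:(lra) hm1 K1.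
  have f2 := case2_fwd_half al _ Xs Ys s2 m2 a0 cP XsP YsP ltac:(lra) hm2 K2.
  have sm : (m1 + m2) * Ys = (s1 + s2) * Xs by rewrite eX eY mulrC.
  have e1 : m1 * Ys = s1 * Xs by lra.
  have e2 : m2 * Ys = s2 * Xs by lra.
  split.
    exact: (fwd_alg Bn1 Bo1 s1 m1 Xs Ys Nm a (Bo1 + Bo2 + B) BtP Nma XYs YsE e1 F1 hs1).
  exact: (fwd_alg Bn2 Bo2 s2 m2 Xs Ys Nm a (Bo1 + Bo2 + B) BtP Nma XYs YsE e2 F2 hs2).
move=> [c1 c2].
have Ka1 : Bn1 < s1 -> 0 <= PP al R0 lamS Nf (s1 + s2) * (1 - al * s1 / (s1 + s2))
                             - QQ al R0 Nm (m1 + m2) * (1 - al * m1 / (m1 + m2)).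
  move=> h.
  have := KKTa al _ _ s2 m2 Bn1 (Bo1 + Bn1) s1 m1 a0 a1 cS0 cM0 ltac:(lra) hm2 Bn10 ltac:(lra)
    N1 F1 h hm1 Xp.
  by rewrite Dv_PQ.
have Ka2 : Bn2 < s2 -> 0 <= PP al R0 lamS Nf (s1 + s2) * (1 - al * s2 / (s1 + s2))
                             - QQ al R0 Nm (m1 + m2) * (1 - al * m2 / (m1 + m2)).
  move=> h.
  have := KKTa al _ _ s1 m1 Bn2 (Bo2 + Bn2) s2 m2 a0 a1 cS0 cM0 ltac:(lra) hm1 Bn20 ltac:(lra)
    N2 F2 h hm2 ltac:(lra).
  by rewrite Dv_PQ (addrC s2 s1) (addrC m2 m1).
have Kb1 : 0 < m1 -> PP al R0 lamS Nf (s1 + s2) * (1 - al * s1 / (s1 + s2))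
                             - QQ al R0 Nm (m1 + m2) * (1 - al * m1 / (m1 + m2)) <= 0.
  move=> h.
  have := KKTb al _ _ s2 m2 Bn1 (Bo1 + Bn1) s1 m1 a0 a1 cS0 cM0 ltac:(lra) hm2 Bn10 ltac:(lra)
    N1 F1 hs1 h.
  by rewrite Dv_PQ.
have Kb2 : 0 < m2 -> PP al R0 lamS Nf (s1 + s2) * (1 - al * s2 / (s1 + s2))
                             - QQ al R0 Nm (m1 + m2) * (1 - al * m2 / (m1 + m2)) <= 0.
  move=> h.
  have := KKTb al _ _ s1 m1 Bn2 (Bo2 + Bn2) s2 m2 a0 a1 cS0 cM0 ltac:(lra) hm1 Bn20 ltac:(lra)
    N2 F2 hs2 h.
  by rewrite Dv_PQ (addrC s2 s1) (addrC m2 m1).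
clear N1 N2.
have Yp : 0 < s1 + s2 by lra.
have [PQa PQb] : (PP al R0 lamS Nf (s1 + s2) < QQ al R0 Nm (m1 + m2) <-> a * (m1 + m2) < Nm * (s1 + s2)) /\
   (QQ al R0 Nm (m1 + m2) < PP al R0 lamS Nf (s1 + s2) <-> Nm * (s1 + s2) < a * (m1 + m2)).
  exact: (PQ_lemma al R0 lamS Nm Nf (m1 + m2) (s1 + s2) a0 a1 R00 l1 Nm0 Nf0 Xp Yp).
have Pp := PP_gt0 al R0 lamS Nf (s1 + s2) R00 l0 Nf0 Yp.
have Qp := QQ_gt0 al R0 Nm (m1 + m2) R00 Nm0 Xp.
move: Ka1 Ka2 Kb1 Kb2 PQa PQb Pp Qp.
set P := PP al R0 lamS Nf (s1 + s2).
set Q := QQ al R0 Nm (m1 + m2).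
move=> Ka1 Ka2 Kb1 Kb2 PQa PQb Pp Qp.
have sum := sumD al P Q (m1 + m2) (s1 + s2) s1 s2 m1 m2 Xp Yp erefl erefl.
have h2a : 0 < 2 - al by lra.
have eY : s1 + s2 = Ys.
  case: (ltgtP (s1 + s2) Ys) => // hY.
  - have XX : Xs < m1 + m2 by lra.
    have k1 : Nm * (s1 + s2) < Nm * Ys by rewrite ltr_pM2l.
    have k2 : a * Xs < a * (m1 + m2) by rewrite ltr_pM2l.
    have QP : Q < P by apply/PQb; lra.
    have pos : 0 < (2 - al) * (P - Q) by apply: mulr_gt0; lra.
    case: (ltP 0 (P * (1 - al * s1 / (s1 + s2)) - Q * (1 - al * m1 / (m1 + m2)))) => hD1.
      exfalso; exact: (case2_lt_half al P Q (m1 + m2) (s1 + s2) s1 m1 s2 m2 a0 a1 Qp QP Xp Yp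
        erefl erefl hm1 ltac:(lra) ltac:(lra) Kb1 Kb2 hD1).
    have hD2 : 0 < P * (1 - al * s2 / (s1 + s2)) - Q * (1 - al * m2 / (m1 + m2)) by lra.
    exfalso; exact: (case2_lt_half al P Q (m1 + m2) (s1 + s2) s2 m2 s1 m1 a0 a1 Qp QP Xp Yp
        ltac:(lra) ltac:(lra) hm2 ltac:(lra) ltac:(lra) Kb2 Kb1 hD2).
  - have XX : m1 + m2 < Xs by lra.
    have k1 : Nm * Ys < Nm * (s1 + s2) by rewrite ltr_pM2l.
    have k2 : a * (m1 + m2) < a * Xs by rewrite ltr_pM2l.
    have PQ : P < Q by apply/PQa; lra.
    have neg : (2 - al) * (P - Q) < 0 by rewrite pmulr_rlt0 //; lra.
    have BY : B < s1 + s2 by lra.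
    have g1 := gt_alg Bn1 Bo1 (m1 + m2) (s1 + s2) Xs Ys Nm a c1 aXs XX hY Bn10 Bo10 Nm0 XsP.
    have g2 := gt_alg Bn2 Bo2 (m1 + m2) (s1 + s2) Xs Ys Nm a c2 aXs XX hY Bn20 Bo20 Nm0 XsP.
    case: (ltP (P * (1 - al * s1 / (s1 + s2)) - Q * (1 - al * m1 / (m1 + m2))) 0) => hD1.
      exfalso; exact: (case2_gt_half al P Q (m1 + m2) (s1 + s2) B s1 m1 s2 m2 Bn1 Bo1 Bn2 Bo2
        a0 a1 Pp PQ Xp Yp BY erefl erefl F1 BE Bn10 hs1 g1 Ka1 Ka2 hD1).
    have hD2 : P * (1 - al * s2 / (s1 + s2)) - Q * (1 - al * m2 / (m1 + m2)) < 0 by lra.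
    exfalso; exact: (case2_gt_half al P Q (m1 + m2) (s1 + s2) B s2 m2 s1 m1 Bn2 Bo2 Bn1 Bo1
        a0 a1 Pp PQ Xp Yp BY ltac:(lra) ltac:(lra) F2 ltac:(lra) Bn20 hs2 ltac:(lra) Ka2 Ka1 hD2).
split => //; lra.
Qed.


Theorem theorem4 (R : realType) (al R0 lamS Nm Nf Bo1 Bo2 Bn1 Bn2 B : R) :
  0 < al -> al < 1 -> 0 < R0 -> 1 < lamS -> 0 < Nm -> 0 < Nf ->
  0 < Bo1 -> 0 < Bo2 -> 0 < B -> 0 <= Bn1 -> 0 <= Bn2 -> Bn1 + Bn2 = B ->
  (T_thr al lamS Nm Nf Bo1 Bo2 < B ->
     SW_w_opt al R0 lamS Nm Nf Bo1 Bo2 Bn1 Bn2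
       < SW_wo_opt al R0 lamS Nm Nf Bo1 Bo2 Bn1 Bn2 /\
     forall p : alloc R, is_NE_w al R0 lamS Nm Nf Bo1 Bo2 Bn1 Bn2 p ->
       SW al R0 lamS Nm Nf p <= SW_w_opt al R0 lamS Nm Nf Bo1 Bo2 Bn1 Bn2 /\
       (SW al R0 lamS Nm Nf p = SW_w_opt al R0 lamS Nm Nf Bo1 Bo2 Bn1 Bn2 <->
          cond_i al R0 lamS Nm Nf Bo1 Bo2 Bn1 Bn2 Bn1 Bo1 /\
          cond_i al R0 lamS Nm Nf Bo1 Bo2 Bn1 Bn2 Bn2 Bo2)) /\
  (B <= T_thr al lamS Nm Nf Bo1 Bo2 ->
     SW_w_opt al R0 lamS Nm Nf Bo1 Bo2 Bn1 Bn2
       = SW_wo_opt al R0 lamS Nm Nf Bo1 Bo2 Bn1 Bn2 /\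
     forall p : alloc R, is_NE_w al R0 lamS Nm Nf Bo1 Bo2 Bn1 Bn2 p ->
       SW al R0 lamS Nm Nf p <= SW_w_opt al R0 lamS Nm Nf Bo1 Bo2 Bn1 Bn2 /\
       (SW al R0 lamS Nm Nf p = SW_w_opt al R0 lamS Nm Nf Bo1 Bo2 Bn1 Bn2 /\
        SW_w_opt al R0 lamS Nm Nf Bo1 Bo2 Bn1 Bn2
          = SW_wo_opt al R0 lamS Nm Nf Bo1 Bo2 Bn1 Bn2 <->
          (B - Bo2 * a_const al lamS Nf / Nm <= Bn1 /\
           Bn1 <= Bo1 * a_const al lamS Nf / Nm /\ Bn2 = B - Bn1))).
Proof.
move=> a0 a1 R00 l1 Nm0 Nf0 Bo10 Bo20 B0 Bn10 Bn20 BE.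
have l0 : 0 < lamS by lra.
have aP : 0 < a_const al lamS Nf by rewrite /a_const mulr_gt0 // powR_gt0.
have TE : T_thr al lamS Nm Nf Bo1 Bo2 = (Bo1 + Bo2) * a_const al lamS Nf / Nm by [].
rewrite TE; clear TE.
have BtP : 0 < Bo1 + Bo2 + B by lra.
have Nma : 0 < Nm + a_const al lamS Nf by lra.
have YsP : 0 < a_const al lamS Nf * (Bo1 + Bo2 + B) / (Nm + a_const al lamS Nf)
  by rewrite divr_gt0 // mulr_gt0.
have XsP : 0 < Nm * (Bo1 + Bo2 + B) / (Nm + a_const al lamS Nf) by rewrite divr_gt0 // mulr_gt0.
have XYs : Nm * (Bo1 + Bo2 + B) / (Nm + a_const al lamS Nf) + a_const al lamS Nf * (Bo1 + Bo2 + B) / (Nm + a_const al lamS Nf) = Bo1 + Bo2 + B.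
  by field; rewrite gt_eqF.
have aXs : a_const al lamS Nf * (Nm * (Bo1 + Bo2 + B) / (Nm + a_const al lamS Nf)) =
   Nm * (a_const al lamS Nf * (Bo1 + Bo2 + B) / (Nm + a_const al lamS Nf)).
  by field; rewrite gt_eqF.
have [PQ1 PQ2] := PQ_lemma al R0 lamS Nm Nf _ _ a0 a1 R00 l1 Nm0 Nf0 XsP YsP.
move: YsP XsP XYs aXs PQ1 PQ2 aP Nma.
set a := a_const al lamS Nf.
set Ys := a * (Bo1 + Bo2 + B) / (Nm + a).
set Xs := Nm * (Bo1 + Bo2 + B) / (Nm + a).
move=> YsP XsP XYs aXs PQ1 PQ2 aP Nma.
have PQs : PP al R0 lamS Nf Ys = QQ al R0 Nm Xs.
  apply/eqP; rewrite eq_le !leNgt; apply/andP; split; apply/negP => h.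
  - by move: ((proj1 PQ2) h); rewrite aXs ltxx.
  - by move: ((proj1 PQ1) h); rewrite aXs ltxx.
clear PQ1 PQ2.
have SWE : forall p, SW al R0 lamS Nm Nf p = swf al R0 lamS Nm Nf (BM1 p + BM2 p) (BS1 p + BS2 p) by [].
have GB : forall p, alloc_feasible (Bo1 + Bn1) 0 (Bo2 + Bn2) 0 p ->
   SW al R0 lamS Nm Nf p <= swf al R0 lamS Nm Nf Xs Ys /\
   (BM1 p + BM2 p != Xs \/ BS1 p + BS2 p != Ys -> SW al R0 lamS Nm Nf p < swf al R0 lamS Nm Nf Xs Ys).
  move=> [m1 s1 m2 s2] [[/= hm1 [hs1 hb1]] [/= hm2 [hs2 hb2]]].
  rewrite SWE /=.
  exact: (GB_lemma al R0 lamS Nm Nf Xs Ys (Bo1 + Bo2 + B) m1 s1 m2 s2 a0 a1 R00 l0 Nm0 Nf0 XsP YsP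
    XYs PQs hm1 hm2 hs1 hs2 ltac:(lra)).
have GBwo : forall y, (exists p, alloc_feasible (Bo1 + Bn1) 0 (Bo2 + Bn2) 0 p /\
    SW al R0 lamS Nm Nf p = y) -> y <= swf al R0 lamS Nm Nf Xs Ys.
  by move=> y [p [fp <-]]; apply: (proj1 (GB p fp)).
split.
  move=> hT.
  have aBo : a * (Bo1 + Bo2) < Nm * B by move: hT; rewrite ltr_pdivrMr //; lra.
  have YsB : Ys < B by rewrite /Ys ltr_pdivrMr //; lra.
  have BoP : 0 < Bo1 + Bo2 by lra.
  have [PQb1 _] := PQ_lemma al R0 lamS Nm Nf (Bo1 + Bo2) B a0 a1 R00 l1 Nm0 Nf0 BoP B0.
  have P0Q0 : PP al R0 lamS Nf B < QQ al R0 Nm (Bo1 + Bo2) by apply/PQb1.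
  clear PQb1.
  have CB : forall m1 s1 m2 s2,
     alloc_feasible (Bo1 + Bn1) Bn1 (Bo2 + Bn2) Bn2 (Alloc m1 s1 m2 s2) ->
     swf al R0 lamS Nm Nf (m1 + m2) (s1 + s2) <= swf al R0 lamS Nm Nf (Bo1 + Bo2) B /\
     (m1 + m2 != Bo1 + Bo2 \/ s1 + s2 != B ->
        swf al R0 lamS Nm Nf (m1 + m2) (s1 + s2) < swf al R0 lamS Nm Nf (Bo1 + Bo2) B).
    move=> m1 s1 m2 s2 [[/= hm1 [hs1 hb1]] [/= hm2 [hs2 hb2]]].
    exact: (CB_lemma al R0 lamS Nm Nf Bo1 Bo2 Bn1 Bn2 B m1 s1 m2 s2 a0 a1 R00 l0 Nm0 Nf0 BoP B0 BE
      P0Q0 hm1 hm2 hs1 hs2 hb1 hb2).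
  have p0f : alloc_feasible (Bo1 + Bn1) Bn1 (Bo2 + Bn2) Bn2 (Alloc Bo1 Bn1 Bo2 Bn2).
    by split; split => /=; [lra | split; lra | lra | split; lra].
  have SWw : SW_w_opt al R0 lamS Nm Nf Bo1 Bo2 Bn1 Bn2 = swf al R0 lamS Nm Nf (Bo1 + Bo2) B.
    rewrite /SW_w_opt; apply: sup_eq.
      by exists (Alloc Bo1 Bn1 Bo2 Bn2); split => //; rewrite SWE /= BE.
    by move=> y [[m1 s1 m2 s2] [fp <-]]; rewrite SWE /=; exact: (CB _ _ _ _ fp).1.
  have e1 : (Bo1 + Bn1) * Xs / (Bo1 + Bo2 + B) + (Bo1 + Bn1) * Ys / (Bo1 + Bo2 + B) = Bo1 + Bn1.
    by rewrite -mulrDl -mulrDr XYs mulfK // gt_eqF.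
  have e2 : (Bo2 + Bn2) * Xs / (Bo1 + Bo2 + B) + (Bo2 + Bn2) * Ys / (Bo1 + Bo2 + B) = Bo2 + Bn2.
    by rewrite -mulrDl -mulrDr XYs mulfK // gt_eqF.
  have g1 : 0 <= (Bo1 + Bn1) * Xs / (Bo1 + Bo2 + B) by apply: divr_ge0; [apply: mulr_ge0|]; lra.
  have g2 : 0 <= (Bo1 + Bn1) * Ys / (Bo1 + Bo2 + B) by apply: divr_ge0; [apply: mulr_ge0|]; lra.
  have g3 : 0 <= (Bo2 + Bn2) * Xs / (Bo1 + Bo2 + B) by apply: divr_ge0; [apply: mulr_ge0|]; lra.
  have g4 : 0 <= (Bo2 + Bn2) * Ys / (Bo1 + Bo2 + B) by apply: divr_ge0; [apply: mulr_ge0|]; lra.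
  have pu_f : alloc_feasible (Bo1 + Bn1) 0 (Bo2 + Bn2) 0
     (Alloc ((Bo1 + Bn1) * Xs / (Bo1 + Bo2 + B)) ((Bo1 + Bn1) * Ys / (Bo1 + Bo2 + B))
            ((Bo2 + Bn2) * Xs / (Bo1 + Bo2 + B)) ((Bo2 + Bn2) * Ys / (Bo1 + Bo2 + B))).
    split; split => //=; split => //; lra.
  have tot : Bo1 + Bn1 + (Bo2 + Bn2) = Bo1 + Bo2 + B by rewrite -BE; ring.
  have pu_sw : SW al R0 lamS Nm Nf
     (Alloc ((Bo1 + Bn1) * Xs / (Bo1 + Bo2 + B)) ((Bo1 + Bn1) * Ys / (Bo1 + Bo2 + B))
            ((Bo2 + Bn2) * Xs / (Bo1 + Bo2 + B)) ((Bo2 + Bn2) * Ys / (Bo1 + Bo2 + B)))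
     = swf al R0 lamS Nm Nf Xs Ys.
    rewrite SWE /=.
    rewrite -mulrDl -mulrDl -mulrDl -mulrDl tot.
    by rewrite [_ * Xs]mulrC [_ * Ys]mulrC !mulfK // gt_eqF.
  have SWwo : swf al R0 lamS Nm Nf Xs Ys <= SW_wo_opt al R0 lamS Nm Nf Bo1 Bo2 Bn1 Bn2.
    rewrite /SW_wo_opt; apply: (sup_ge _ _ (swf al R0 lamS Nm Nf Xs Ys)); last exact: GBwo.
    by eexists; split; [exact: pu_f | exact: pu_sw].
  have sw0lt : swf al R0 lamS Nm Nf (Bo1 + Bo2) B < swf al R0 lamS Nm Nf Xs Ys.
    have := (GB _ (cf_uf _ _ _ _ _ Bn10 Bn20 p0f)).2; rewrite SWE /= BE.
    by apply; right; apply/eqP; lra.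
  split; first by rewrite SWw; lra.
  move=> [m1 s1 m2 s2] Hne.
  have fp := Hne.1.
  have [cb1 cb2] := CB m1 s1 m2 s2 fp.
  have Ceq := case1_NE al R0 lamS Nm Nf Bo1 Bo2 Bn1 Bn2 B m1 s1 m2 s2 a0 a1 R00 l1 Nm0 Nf0
    Bo10 Bo20 B0 Bn10 Bn20 BE P0Q0 Hne.
  rewrite SWw SWE /=.
  split; first exact: cb1.
  split.
    move=> h; apply/Ceq.
    split.
      apply/eqP; apply: contraT => hn.
      by have := cb2 (or_introl hn); rewrite h ltxx.
    apply/eqP; apply: contraT => hn.
    by have := cb2 (or_intror hn); rewrite h ltxx.
  by move=> /Ceq [-> ->].
move=> hT.
have NB : Nm * B <= a * (Bo1 + Bo2) by move: hT; rewrite ler_pdivlMr //; lra.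
have BYs : B <= Ys by rewrite /Ys ler_pdivlMr //; lra.
have BoP : 0 < Bo1 + Bo2 by lra.
have thE : exists th, 0 <= th /\ th <= 1 /\ th * (Bo1 + Bo2) = Ys - B.
  exists ((Ys - B) / (Bo1 + Bo2)); split; first by apply: divr_ge0; lra.
  split; first by rewrite ler_pdivrMr //; lra.
  by rewrite divfK // gt_eqF.
have [th [th0 [th1 thB]]] := thE.
have pcf : alloc_feasible (Bo1 + Bn1) Bn1 (Bo2 + Bn2) Bn2
   (Alloc ((1 - th) * Bo1) (Bn1 + th * Bo1) ((1 - th) * Bo2) (Bn2 + th * Bo2)).
  have k1 : 0 <= (1 - th) * Bo1 by apply: mulr_ge0; lra.
  have k2 : 0 <= th * Bo1 by apply: mulr_ge0; lra.
  have k3 : 0 <= (1 - th) * Bo2 by apply: mulr_ge0; lra.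
  have k4 : 0 <= th * Bo2 by apply: mulr_ge0; lra.
  split; split => //=; split; lra.
have pcsw : SW al R0 lamS Nm Nf
   (Alloc ((1 - th) * Bo1) (Bn1 + th * Bo1) ((1 - th) * Bo2) (Bn2 + th * Bo2)) =
   swf al R0 lamS Nm Nf Xs Ys.
  rewrite SWE /=.
  have -> : (1 - th) * Bo1 + (1 - th) * Bo2 = Xs by lra.
  have -> : Bn1 + th * Bo1 + (Bn2 + th * Bo2) = Ys by lra.
  by [].
have SWw : SW_w_opt al R0 lamS Nm Nf Bo1 Bo2 Bn1 Bn2 = swf al R0 lamS Nm Nf Xs Ys.
  rewrite /SW_w_opt; apply: sup_eq.
    by eexists; split; [exact: pcf | exact: pcsw].
  by move=> y [p [fp <-]]; apply: (proj1 (GB p (cf_uf _ _ _ _ _ Bn10 Bn20 fp))).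
have SWwo : SW_wo_opt al R0 lamS Nm Nf Bo1 Bo2 Bn1 Bn2 = swf al R0 lamS Nm Nf Xs Ys.
  rewrite /SW_wo_opt; apply: sup_eq; last exact: GBwo.
  by eexists; split; [exact: (cf_uf _ _ _ _ _ Bn10 Bn20 pcf) | exact: pcsw].
split; first by rewrite SWw SWwo.
move=> [m1 s1 m2 s2] Hne.
have fp := Hne.1.
have [gb1 gb2] := GB _ (cf_uf _ _ _ _ _ Bn10 Bn20 fp).
rewrite SWE /= in gb1 gb2.
have Ceq := case2_NE al R0 lamS Nm Nf Bo1 Bo2 Bn1 Bn2 B m1 s1 m2 s2 Xs Ys a0 a1 R00 l1 Nm0 Nf0
  Bo10 Bo20 B0 Bn10 Bn20 BE XsP YsP XYs aXs BYs PQs Hne.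
rewrite SWw SWwo SWE /=.
split; first exact: gb1.
have iv1 : Bn1 <= Bo1 * a / Nm <-> Bn1 * Nm <= Bo1 * a by rewrite ler_pdivlMr.
have iv2 : B - Bo2 * a / Nm <= Bn1 <-> Bn2 * Nm <= Bo2 * a.
  have -> : (B - Bo2 * a / Nm <= Bn1) = (Bn2 <= Bo2 * a / Nm) by apply/idP/idP => h; lra.
  by rewrite ler_pdivlMr.
split.
  move=> [h _].
  have [c1 c2] : Bn1 * Nm <= Bo1 * a /\ Bn2 * Nm <= Bo2 * a.
    apply/Ceq; split.
      apply/eqP; apply: contraT => hn.
      by have := gb2 (or_introl hn); rewrite h ltxx.
    apply/eqP; apply: contraT => hn.
    by have := gb2 (or_intror hn); rewrite h ltxx.
  split; first exact/iv2.
  split; first exact/iv1.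
  lra.
move=> [i1 [i2 _]].
have [-> ->] := (proj2 Ceq) (conj (proj1 iv1 i2) (proj1 iv2 i1)).
by [].
Qed.
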